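(* Let $k$ be a field of characteristic $2$, let $\mathcal{G}$ be the complete quadrilateral, $A=M_k(\mathcal{G},1)$ and $A'=A/\operatorname{Ann}(A)$. Then there are isomorphisms of algebraic groups (i) $\operatorname{Aut}(A')\cong \mathbb{G}_a^2\rtimes \mathrm{GL}_2$, and (ii) $\operatorname{Aut}(A)\cong \mathbb{G}_a^2\rtimes(\operatorname{Aut}(A')\times\mathbb{G}_m)$, where $\mathbb{G}_m$ acts on this $\mathbb{G}_a^2$ by scalar multiplication, the normal subgroup $\mathbb{G}_a^2\le\operatorname{Aut}(A')$ from (i) acts trivially on it, and $\mathrm{GL}_2\le \operatorname{Aut}(A')$ acts on it by first applying the homomorphism $\mathrm{GL}_2\to\mathrm{SL}_2$, $M=\begin{pmatrix}\alpha&\beta\\ \gamma&\delta\end{pmatrix}\mapsto(\det M)^{-1}\begin{pmatrix}\alpha^2&\beta^2\\ \gamma^2&\delta^2\end{pmatrix}$, and then right multiplication on row vectors in $\mathbb{G}_a^2$.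
   Context: The complete quadrilateral is the partial linear space with $6$ points $a,b,c,x,y,z$ and $4$ lines $\{a,b,c\}$, $\{a,y,z\}$, $\{b,x,z\}$, $\{c,x,y\}$ (the Fischer space of $\mathrm{Sym}(4)$). For distinct collinear points $p,q$ (written $p\sim q$), $p\wedge q$ is the third point of their line. The nilpotent Matsuo algebra $A=M_k(\mathcal{G},1)$ is the commutative $k$-algebra with basis the points and bilinear product $p\cdot q=0$ if $p=q$ or $p\not\sim q$, and $p\cdot q=p+q+p\wedge q$ if $p\sim q$. $\operatorname{Ann}(A)=\{v\in A: vw=0\ \forall w\in A\}$ and $A'=A/\operatorname{Ann}(A)$ with induced product. $\operatorname{Aut}(A)$, $\operatorname{Aut}(A')$ denote the automorphism group schemes, viewed as functors from commutative $k$-algebras to groups. *)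

(* Defs.v *)
From HB Require Import structures.
From mathcomp Require Import all_boot all_order all_algebra.
Set Implicit Arguments. Unset Strict Implicit. Unset Printing Implicit Defensive.
Import Order.TTheory GRing.Theory Num.Theory.
Local Open Scope ring_scope.

Definition pa : 'I_6 := inord 0.
Definition pb : 'I_6 := inord 1.
Definition pc : 'I_6 := inord 2.
Definition px : 'I_6 := inord 3.
Definition py : 'I_6 := inord 4.
Definition pz : 'I_6 := inord 5.

Definition cq_lines : seq {set 'I_6} :=
  [:: [set pa; pb; pc]; [set pa; py; pz]; [set pb; px; pz]; [set pc; px; py]].

Definition cq_coll (p q : 'I_6) : bool :=
  (p != q) && has (fun L : {set 'I_6} => (p \in L) && (q \in L)) cq_lines.

(* p /\ q : the third point of the line through p and q (default p) *)
Definition cq_wedge (p q : 'I_6) : 'I_6 :=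
  odflt p [pick r | [&& r != p, r != q &
     has (fun L : {set 'I_6} => [&& p \in L, q \in L & r \in L]) cq_lines]].

Definition erow (R : nzRingType) (n : nat) (i : 'I_n) : 'rV[R]_n := delta_mx 0 i.

Definition scmul (R : nzRingType) (n : nat) (sc : 'I_n -> 'I_n -> 'rV[R]_n)
  (u v : 'rV[R]_n) : 'rV[R]_n :=
  \sum_(i < n) \sum_(j < n) (u 0 i * v 0 j) *: sc i j.

(* base change of k-structure constants to a k-algebra R *)
Definition bc (k : fieldType) (R : comUnitAlgType k) (n : nat)
  (sc : 'I_n -> 'I_n -> 'rV[k]_n) : 'I_n -> 'I_n -> 'rV[R]_n :=
  fun i j => map_mx (in_alg R) (sc i j).

(* R-points of the automorphism group scheme: invertible R-linear maps
   (acting on row vectors on the right) preserving the product. *)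
Definition is_aut (R : comUnitRingType) (n : nat) (sc : 'I_n -> 'I_n -> 'rV[R]_n)
  (g : 'M[R]_n) : Prop :=
  g \in unitmx /\
  forall u v : 'rV[R]_n, scmul sc (u *m g) (v *m g) = scmul sc u v *m g.

(* p.q = 0 if p = q or p not~ q ;  p.q = p + q + p/\q if p ~ q.
   The structure constants are integers, so A (x)_k R has the same ones. *)
Definition matsuo_sc (R : nzRingType) (p q : 'I_6) : 'rV[R]_6 :=
  if cq_coll p q then erow R p + erow R q + erow R (cq_wedge p q) else 0.

Definition mulA (R : nzRingType) (u v : 'rV[R]_6) : 'rV[R]_6 :=
  scmul (matsuo_sc R) u v.

Definition in_annA (k : fieldType) (v : 'rV[k]_6) : Prop :=
  forall w : 'rV[k]_6, mulA v w = 0.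

(* (k^n', sc') is a model of A' = A/Ann(A), with quotient map v |-> v *m P:
   P is surjective, its kernel is exactly Ann(A), and it is multiplicative
   (so sc' is the induced product). *)
Definition ann_quotient_model (k : fieldType) (n' : nat)
  (sc' : 'I_n' -> 'I_n' -> 'rV[k]_n') (P : 'M[k]_(6, n')) : Prop :=
  [/\ row_full P,
      (forall v : 'rV[k]_6, v *m P = 0 <-> in_annA v) &
      (forall u v : 'rV[k]_6, mulA u v *m P = scmul sc' (u *m P) (v *m P))].

(* X R carries the group GX R (a subset, with law mX R), similarly Y;
   fX, fY are the functorial actions of k-algebra morphisms.
   phi is a natural transformation that is a group isomorphism for every R. *)
Definition group_functor_iso (k : fieldType)
  (X Y : comUnitAlgType k -> Type)
  (GX : forall R, X R -> Prop) (GY : forall R, Y R -> Prop)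
  (mX : forall R, X R -> X R -> X R) (mY : forall R, Y R -> Y R -> Y R)
  (fX : forall (R S : comUnitAlgType k), {lrmorphism R -> S} -> X R -> X S)
  (fY : forall (R S : comUnitAlgType k), {lrmorphism R -> S} -> Y R -> Y S)
  (phi : forall R, X R -> Y R) : Prop :=
  [/\ (forall (R : comUnitAlgType k) x, GX R x -> GY R (phi R x)),
      (forall (R : comUnitAlgType k) x y, GX R x -> GX R y ->
          phi R (mX R x y) = mY R (phi R x) (phi R y)),
      (forall (R : comUnitAlgType k) x y, GX R x -> GX R y -> phi R x = phi R y -> x = y),
      (forall (R : comUnitAlgType k) y, GY R y -> exists2 x, GX R x & phi R x = y) &
      (forall (R S : comUnitAlgType k) (f : {lrmorphism R -> S}) x, GX R x ->
          phi S (fX R S f x) = fY R S f (phi R x))].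

Definition GL2_right_action (k : fieldType)
  (rho : forall R : comUnitAlgType k, 'M[R]_2 -> 'rV[R]_2 -> 'rV[R]_2) : Prop :=
  [/\ (forall (R : comUnitAlgType k) (M : 'M[R]_2) v w, M \in unitmx ->
          rho R M (v + w) = rho R M v + rho R M w),
      (forall (R : comUnitAlgType k) (M M' : 'M[R]_2) v, M \in unitmx -> M' \in unitmx ->
          rho R (M *m M') v = rho R M' (rho R M v)),
      (forall (R : comUnitAlgType k) (v : 'rV[R]_2), rho R 1%:M v = v) &
      (forall (R S : comUnitAlgType k) (f : {lrmorphism R -> S}) (M : 'M[R]_2) v, M \in unitmx ->
          map_mx f (rho R M v) = rho S (map_mx f M) (map_mx f v))].

(* semidirect product G_a^2 x| H for a right action act of H on G_a^2:
   (v,h)(v',h') = (act h' v + v', h h') *)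
Definition sdmul (R : nzRingType) (H : Type) (hmul : H -> H -> H)
  (act : H -> 'rV[R]_2 -> 'rV[R]_2) (y y' : 'rV[R]_2 * H) : 'rV[R]_2 * H :=
  (act y'.2 y.1 + y'.1, hmul y.2 y'.2).

Definition twist (R : comUnitRingType) (M : 'M[R]_2) : 'M[R]_2 :=
  (\det M)^-1 *: map_mx (fun e => e ^+ 2) M.

(* Main.v *)
Require Import Defs.
From HB Require Import structures.
From mathcomp Require Import all_boot all_order all_algebra.
From mathcomp Require Import ring.
Set Implicit Arguments. Unset Strict Implicit. Unset Printing Implicit Defensive.
Import Order.TTheory GRing.Theory Num.Theory.
Local Open Scope ring_scope.

Section Generic.
Variable R : comUnitRingType.

Lemma scmul_rowE n (sc : 'I_n -> 'I_n -> 'rV[R]_n) m (g : 'M[R]_(m,n)) (u v : 'rV[R]_m) :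
  scmul sc (u *m g) (v *m g) =
  \sum_(k < m) \sum_(l < m) (u 0 k * v 0 l) *: scmul sc (row k g) (row l g).
Proof.
rewrite /scmul.
have -> : \sum_(k < m) \sum_(l < m) (u 0 k * v 0 l) *:
      (\sum_(i < n) \sum_(j < n) (row k g 0 i * row l g 0 j) *: sc i j)
  = \sum_(k < m) \sum_(l < m) \sum_(i < n) \sum_(j < n)
      (u 0 k * v 0 l * (g k i * g l j)) *: sc i j.
  apply: eq_bigr => k _; apply: eq_bigr => l _; rewrite scaler_sumr.
  apply: eq_bigr => i _; rewrite scaler_sumr; apply: eq_bigr => j _.
  by rewrite scalerA !mxE.
symmetry.
under eq_bigr => k _ do rewrite exchange_big /=.
rewrite exchange_big /=; apply: eq_bigr => i _.
under eq_bigr => k _ do rewrite exchange_big /=.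
rewrite exchange_big /=; apply: eq_bigr => j _.
symmetry.
rewrite !mxE big_distrlr /= scaler_suml; apply: eq_bigr => k _.
rewrite scaler_suml; apply: eq_bigr => l _.
by congr (_ *: _); ring.
Qed.

Lemma scmul_e n (sc : 'I_n -> 'I_n -> 'rV[R]_n) i j :
  scmul sc (delta_mx 0 i) (delta_mx 0 j) = sc i j.
Proof.
rewrite /scmul (bigD1 i) //= [X in _ + X]big1; last first.
  move=> k nk; apply: big1 => l _; rewrite !mxE.
  by rewrite (negbTE nk) andbF mul0r scale0r.
rewrite addr0 (bigD1 j) //= [X in _ + X]big1; last first.
  by move=> l nl; rewrite !mxE (negbTE nl) andbF mulr0 scale0r.
by rewrite addr0 !mxE !eqxx mulr1 scale1r.
Qed.

Lemma is_aut_basis n sc (g : 'M[R]_n) :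
  (forall i j, scmul sc (row i g) (row j g) = sc i j *m g) ->
  forall u v, scmul sc (u *m g) (v *m g) = scmul sc u v *m g.
Proof.
move=> H u v; rewrite scmul_rowE [X in _ = X *m g]/scmul mulmx_suml; apply: eq_bigr => k _.
rewrite mulmx_suml; apply: eq_bigr => l _.
by rewrite H scalemxAl.
Qed.

Lemma is_aut_rows n sc (g : 'M[R]_n) : is_aut sc g ->
  forall i j, scmul sc (row i g) (row j g) = sc i j *m g.
Proof. by case=> _ H i j; rewrite !rowE H scmul_e. Qed.

Lemma is_autP n sc (g : 'M[R]_n) : g \in unitmx ->
  (forall i j, scmul sc (row i g) (row j g) = sc i j *m g) -> is_aut sc g.
Proof. by move=> gu H; split => //; apply: is_aut_basis. Qed.

Lemma is_aut_inv n sc (g : 'M[R]_n) : is_aut sc g -> is_aut sc (invmx g).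
Proof.
case=> gu H; split; first by rewrite unitmx_inv.
move=> u v.
apply: (can_inj (mulmxK gu)).
by rewrite -H !mulmxKV.
Qed.

Lemma is_aut_transport a b (sc1 : 'I_a -> 'I_a -> 'rV[R]_a) (sc2 : 'I_b -> 'I_b -> 'rV[R]_b)
  (L : 'M[R]_(a,b)) (L' : 'M[R]_(b,a)) :
  L *m L' = 1%:M -> L' *m L = 1%:M ->
  (forall u v, scmul sc2 (u *m L) (v *m L) = scmul sc1 u v *m L) ->
  forall h, is_aut sc2 h <-> is_aut sc1 (L *m h *m L').
Proof.
move=> LL' L'L hL h; split.
  case=> hu Hh; split.
    have : L *m h *m L' *m (L *m invmx h *m L') = 1%:M.
      by rewrite -!mulmxA (mulmxA L' L) L'L mul1mx (mulmxA h) mulmxV // mul1mx.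
    by case/mulmx1_unit.
  move=> u v.
  have eu : forall w : 'rV_a, w *m (L *m h *m L') *m L = w *m L *m h.
    by move=> w; rewrite -!mulmxA L'L mulmx1.
  rewrite -[LHS]mulmx1 -LL' (mulmxA (scmul _ _ _)) -hL !eu Hh hL.
  by rewrite !mulmxA.
move gE : (L *m h *m L') => g [gu Hg].
have hE : h = L' *m g *m L.
  by rewrite -gE !mulmxA L'L mul1mx -mulmxA L'L mulmx1.
split.
  have : h *m (L' *m invmx g *m L) = 1%:M.
    by rewrite {1}hE -!mulmxA (mulmxA L L') LL' mul1mx (mulmxA g) mulmxV // mul1mx.
  by case/mulmx1_unit.
move=> w w'.
have ew : forall x : 'rV_b, x = x *m L' *m L by move=> x; rewrite -mulmxA L'L mulmx1.
rewrite hE.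
have -> : w *m (L' *m g *m L) = (w *m L' *m g) *m L by rewrite !mulmxA.
have -> : w' *m (L' *m g *m L) = (w' *m L' *m g) *m L by rewrite !mulmxA.
rewrite hL Hg [in RHS](ew w) [in RHS](ew w') hL.
by rewrite !mulmxA -(mulmxA _ L L') LL' mulmx1.
Qed.

End Generic.

Lemma map_scmul (aR rR : comUnitRingType) (f : {rmorphism aR -> rR}) n
  (sc : 'I_n -> 'I_n -> 'rV[aR]_n) (u v : 'rV[aR]_n) :
  map_mx f (scmul sc u v) =
  scmul (fun i j => map_mx f (sc i j)) (map_mx f u) (map_mx f v).
Proof.
apply/rowP => k; rewrite /scmul !mxE !summxE rmorph_sum; apply: eq_bigr => i _.
rewrite !summxE rmorph_sum; apply: eq_bigr => j _.
by rewrite !mxE !rmorphM.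
Qed.

Definition t0 : 'I_2 := @Ordinal 2 0 isT.
Definition t1 : 'I_2 := @Ordinal 2 1 isT.
Definition q0 : 'I_5 := @Ordinal 5 0 isT.
Definition q1 : 'I_5 := @Ordinal 5 1 isT.
Definition q2 : 'I_5 := @Ordinal 5 2 isT.
Definition q3 : 'I_5 := @Ordinal 5 3 isT.
Definition q4 : 'I_5 := @Ordinal 5 4 isT.
Definition o0 : 'I_6 := @Ordinal 6 0 isT.
Definition o1 : 'I_6 := @Ordinal 6 1 isT.
Definition o2 : 'I_6 := @Ordinal 6 2 isT.
Definition o3 : 'I_6 := @Ordinal 6 3 isT.
Definition o4 : 'I_6 := @Ordinal 6 4 isT.
Definition o5 : 'I_6 := @Ordinal 6 5 isT.

Lemma sum2 (V : nmodType) (F : 'I_2 -> V) : \sum_(i < 2) F i = F t0 + F t1.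
Proof.
rewrite !big_ord_recr big_ord0 /= add0r.
by congr (_ + _); congr F; apply: val_inj.
Qed.
Lemma sum5 (V : nmodType) (F : 'I_5 -> V) :
  \sum_(i < 5) F i = F q0 + F q1 + F q2 + F q3 + F q4.
Proof.
rewrite !big_ord_recr big_ord0 /= add0r.
by congr (_ + _ + _ + _ + _); congr F; apply: val_inj.
Qed.
Lemma sum6 (V : nmodType) (F : 'I_6 -> V) :
  \sum_(i < 6) F i = F o0 + F o1 + F o2 + F o3 + F o4 + F o5.
Proof.
rewrite !big_ord_recr big_ord0 /= add0r.
by congr (_ + _ + _ + _ + _ + _); congr F; apply: val_inj.
Qed.

Lemma scale_entry (R : nzRingType) m n (a : R) (A : 'M[R]_(m,n)) i j :
  (a *: A) i j = a * A i j.
Proof. by rewrite mxE. Qed.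

Definition mul5 (R : nzRingType) (u v : 'rV[R]_5) : 'rV[R]_5 :=
  \row_(k < 5) match val k with
   | 2 => u 0 q0 * v 0 q1 + u 0 q1 * v 0 q0
   | 3 => u 0 q0 * v 0 q4 + u 0 q4 * v 0 q0 + u 0 q2 * v 0 q3 + u 0 q3 * v 0 q2
   | 4 => u 0 q1 * v 0 q3 + u 0 q3 * v 0 q1 + u 0 q2 * v 0 q4 + u 0 q4 * v 0 q2
   | _ => 0 end.
Definition sc5 (R : nzRingType) (i j : 'I_5) : 'rV[R]_5 := mul5 (erow R i) (erow R j).

Definition mul6 (R : nzRingType) (u v : 'rV[R]_6) : 'rV[R]_6 :=
  \row_(k < 6) match val k with
   | 2 => u 0 o0 * v 0 o1 + u 0 o1 * v 0 o0
   | 3 => u 0 o0 * v 0 o4 + u 0 o4 * v 0 o0 + u 0 o2 * v 0 o3 + u 0 o3 * v 0 o2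
   | 4 => u 0 o1 * v 0 o3 + u 0 o3 * v 0 o1 + u 0 o2 * v 0 o4 + u 0 o4 * v 0 o2
   | _ => 0 end.
Definition sc6 (R : nzRingType) (i j : 'I_6) : 'rV[R]_6 := mul6 (erow R i) (erow R j).

Definition plM (R : nzRingType) (u v : 'rV[R]_6) (x y z : 'I_6) : R :=
  u 0 x * v 0 y + u 0 y * v 0 x + u 0 x * v 0 z + u 0 z * v 0 x + u 0 y * v 0 z + u 0 z * v 0 y.
Definition mulM (R : nzRingType) (u v : 'rV[R]_6) : 'rV[R]_6 :=
  \row_(r < 6) match val r with
 | 0 => plM u v o0 o1 o2 + plM u v o0 o4 o5
 | 1 => plM u v o0 o1 o2 + plM u v o1 o3 o5
 | 2 => plM u v o0 o1 o2 + plM u v o2 o3 o4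
 | 3 => plM u v o1 o3 o5 + plM u v o2 o3 o4
 | 4 => plM u v o0 o4 o5 + plM u v o2 o3 o4
 | _ => plM u v o0 o4 o5 + plM u v o1 o3 o5 end.

Lemma scmul5 (R : comUnitRingType) (u v : 'rV[R]_5) : scmul (sc5 R) u v = mul5 u v.
Proof.
apply/rowP => k; rewrite /scmul summxE sum5 !summxE !sum5 !scale_entry.
rewrite /sc5 /mul5 !mxE.
by case: k => [[|[|[|[|[|//]]]]] Hk] /=; ring.
Qed.

Lemma scmul6 (R : comUnitRingType) (u v : 'rV[R]_6) : scmul (sc6 R) u v = mul6 u v.
Proof.
apply/rowP => k; rewrite /scmul summxE sum6 !summxE !sum6 !scale_entry.
rewrite /sc6 /mul6 !mxE.
by case: k => [[|[|[|[|[|[|//]]]]]] Hk] /=; ring.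
Qed.


Lemma paE : pa = o0. Proof. by apply/val_inj; rewrite /= inordK. Qed.
Lemma pbE : pb = o1. Proof. by apply/val_inj; rewrite /= inordK. Qed.
Lemma pcE : pc = o2. Proof. by apply/val_inj; rewrite /= inordK. Qed.
Lemma pxE : px = o3. Proof. by apply/val_inj; rewrite /= inordK. Qed.
Lemma pyE : py = o4. Proof. by apply/val_inj; rewrite /= inordK. Qed.
Lemma pzE : pz = o5. Proof. by apply/val_inj; rewrite /= inordK. Qed.

Definition colln (i j : nat) : bool := (i != j) && ((i + 3) %% 6 != j)%N.
Definition wedn (i j : nat) : nat := if ((i < 3) && (j < 3))%N then (3 - i - j)%N else (9 - i - j)%N.

Lemma coll_eq (i j : 'I_6) : cq_coll i j = colln i j.
Proof.
rewrite /cq_coll /cq_lines paE pbE pcE pxE pyE pzE /= !inE.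
by case: i => [[|[|[|[|[|[|//]]]]]] Hi]; case: j => [[|[|[|[|[|[|//]]]]]] Hj].
Qed.

Lemma wedge_eq (i j : 'I_6) : colln i j -> val (cq_wedge i j) = wedn i j.
Proof.
rewrite /cq_wedge; case: pickP => [r /and3P [H1 H2 H3] | H0] /=.
  move: H1 H2 H3; rewrite /cq_lines paE pbE pcE pxE pyE pzE /= !inE.
  by case: i => [[|[|[|[|[|[|//]]]]]] Hi]; case: j => [[|[|[|[|[|[|//]]]]]] Hj];
     case: r => [[|[|[|[|[|[|//]]]]]] Hr].
move: (H0 o0) (H0 o1) (H0 o2) (H0 o3) (H0 o4) (H0 o5); clear H0.
rewrite /cq_lines paE pbE pcE pxE pyE pzE /= !inE.
by case: i => [[|[|[|[|[|[|//]]]]]] Hi]; case: j => [[|[|[|[|[|[|//]]]]]] Hj].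
Qed.

Lemma msc_entry (R : nzRingType) (i j r : 'I_6) : matsuo_sc R i j 0 r =
  if colln i j then ((i == r)%:R + (j == r)%:R + (wedn i j == val r)%:R) else 0.
Proof.
rewrite /matsuo_sc coll_eq; case: ifP => h; last by rewrite mxE.
rewrite -(wedge_eq h) !mxE /= !(eq_sym r) //.
Qed.

Lemma scmulM (R : comUnitRingType) (u v : 'rV[R]_6) : scmul (matsuo_sc R) u v = mulM u v.
Proof.
apply/rowP => r; rewrite /scmul summxE sum6 !summxE !sum6 !scale_entry !msc_entry.
rewrite /mulM /plM !mxE.
by case: r => [[|[|[|[|[|[|//]]]]]] Hr] /=; ring.
Qed.

Lemma ord2_cases (P : 'I_2 -> Prop) : P t0 -> P t1 -> forall i, P i.
Proof.
move=> H0 H1 [[|[|//]] Hi].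
- by have -> : Ordinal Hi = t0 by apply: val_inj.
- by have -> : Ordinal Hi = t1 by apply: val_inj.
Qed.
Lemma ord5_cases (P : 'I_5 -> Prop) : P q0 -> P q1 -> P q2 -> P q3 -> P q4 -> forall i, P i.
Proof.
move=> H0 H1 H2 H3 H4 [[|[|[|[|[|//]]]]] Hi].
- by have -> : Ordinal Hi = q0 by apply: val_inj.
- by have -> : Ordinal Hi = q1 by apply: val_inj.
- by have -> : Ordinal Hi = q2 by apply: val_inj.
- by have -> : Ordinal Hi = q3 by apply: val_inj.
- by have -> : Ordinal Hi = q4 by apply: val_inj.
Qed.
Lemma ord6_cases (P : 'I_6 -> Prop) : P o0 -> P o1 -> P o2 -> P o3 -> P o4 -> P o5 -> forall i, P i.
Proof.
move=> H0 H1 H2 H3 H4 H5 [[|[|[|[|[|[|//]]]]]] Hi].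
- by have -> : Ordinal Hi = o0 by apply: val_inj.
- by have -> : Ordinal Hi = o1 by apply: val_inj.
- by have -> : Ordinal Hi = o2 by apply: val_inj.
- by have -> : Ordinal Hi = o3 by apply: val_inj.
- by have -> : Ordinal Hi = o4 by apply: val_inj.
- by have -> : Ordinal Hi = o5 by apply: val_inj.
Qed.

Definition tab5 (R : nzRingType) (i j : 'I_5) : 'rV[R]_5 :=
  match val i, val j with
  | 0,1 | 1,0 => erow R q2 | 0,4 | 4,0 => erow R q3 | 1,3 | 3,1 => erow R q4
  | 2,3 | 3,2 => erow R q3 | 2,4 | 4,2 => erow R q4 | _,_ => 0 end.
Definition tab6 (R : nzRingType) (i j : 'I_6) : 'rV[R]_6 :=
  match val i, val j with
  | 0,1 | 1,0 => erow R o2 | 0,4 | 4,0 => erow R o3 | 1,3 | 3,1 => erow R o4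
  | 2,3 | 3,2 => erow R o3 | 2,4 | 4,2 => erow R o4 | _,_ => 0 end.

Ltac simpc := rewrite /= ?mulr1n ?mulr0n ?mul1r ?mul0r ?mulr1 ?mulr0 ?add0r ?addr0.

Lemma sc5_tab (R : nzRingType) i j : sc5 R i j = tab5 R i j.
Proof.
apply/rowP => k; move: i j k; rewrite /sc5 /mul5 /tab5.
apply: ord5_cases; apply: ord5_cases; apply: ord5_cases; rewrite !mxE; simpc; by rewrite ?mxE.
Qed.
Lemma sc6_tab (R : nzRingType) i j : sc6 R i j = tab6 R i j.
Proof.
apply/rowP => k; move: i j k; rewrite /sc6 /mul6 /tab6.
apply: ord6_cases; apply: ord6_cases; apply: ord6_cases; rewrite !mxE; simpc; by rewrite ?mxE.
Qed.

Section Char2.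
Variable R : comUnitRingType.
Hypothesis h2 : (2%:R : R) = 0.
Lemma c2E (x y W : R) : x = y + 2%:R * W -> x = y.
Proof. by move=> ->; rewrite h2 mul0r addr0. Qed.
Lemma c2E1 (e D x y W V : R) : e * D = 1 -> x = y + 2%:R * W + (e * D - 1) * V -> x = y.
Proof. by move=> eD ->; rewrite h2 eD subrr !mul0r !addr0. Qed.
Lemma c2E2 (e D e' D' x y W V V' : R) : e * D = 1 -> e' * D' = 1 ->
  x = y + 2%:R * W + (e * D - 1) * V + (e' * D' - 1) * V' -> x = y.
Proof. by move=> eD eD' ->; rewrite h2 eD eD' subrr !mul0r !addr0. Qed.
Lemma oppc2 (x : R) : - x = x.
Proof. by apply: (c2E (W := - x)); ring. Qed.
End Char2.

Lemma comb2 (R : comUnitRingType) (x a b c d k1 k2 : R) :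
  a = b -> c = d -> x = k1 * a + k2 * c -> x = k1 * b + k2 * d.
Proof. by move=> -> ->. Qed.
Lemma combA (R : comUnitRingType) (x y a b c d k1 k2 r : R) :
  a = b -> c = d -> x = k1 * a + k2 * c + r -> k1 * b + k2 * d + r = y -> x = y.
Proof. by move=> -> -> -> . Qed.
Lemma solveD (R : comUnitRingType) (x y e D : R) : e * D = 1 -> x * D = y -> x = e * y.
Proof. by move=> eD <-; rewrite mulrCA eD mulr1. Qed.

Lemma erowM (R : nzRingType) m n (i : 'I_m) (g : 'M[R]_(m,n)) : erow R i *m g = row i g.
Proof. by rewrite rowE. Qed.

Lemma det2 (R : comUnitRingType) (G : 'M[R]_2) : \det G = G t0 t0 * G t1 t1 - G t0 t1 * G t1 t0.
Proof.
rewrite (expand_det_row _ t0) sum2 /cofactor !det_mx11 !mxE /=.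
have l0 : lift t0 (0 : 'I_1) = t1 by apply: val_inj.
have l1 : lift t1 (0 : 'I_1) = t0 by apply: val_inj.
rewrite l0 l1 /= expr0 expr1; ring.
Qed.

Definition m5 (j : 'I_2) : 'I_5 := if val j == 0%N then q3 else q4.
Definition zpart (R : nzRingType) (g : 'M[R]_5) : 'rV[R]_2 := \row_(j < 2) g q2 (m5 j).
Definition Gpart (R : nzRingType) (g : 'M[R]_5) : 'M[R]_2 := \matrix_(i < 2, j < 2) g (m5 i) (m5 j).

Lemma aut5_coord (R : comUnitRingType) (g : 'M[R]_5) : is_aut (sc5 R) g ->
  forall i j k, (mul5 (row i g) (row j g)) 0 k = (tab5 R i j *m g) 0 k.
Proof. by move=> Hg i j k; rewrite -scmul5 -sc5_tab (is_aut_rows Hg). Qed.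

Ltac getc5 Hg i j k := have := aut5_coord Hg i j k; rewrite /mul5 /tab5 /= ?erowM ?mul0mx !mxE /=.

Lemma aut5_zero (R : comUnitRingType) (g : 'M[R]_5) : is_aut (sc5 R) g ->
  g q2 q0 = 0 /\ g q2 q1 = 0 /\ g q3 q0 = 0 /\ g q3 q1 = 0 /\ g q3 q2 = 0 /\ g q4 q0 = 0 /\ g q4 q1 = 0 /\ g q4 q2 = 0.
Proof.
move=> Hg.
getc5 Hg q0 q1 q0 => a1; getc5 Hg q0 q1 q1 => a2.
getc5 Hg q0 q4 q0 => a3; getc5 Hg q0 q4 q1 => a4.
getc5 Hg q1 q3 q0 => a5; getc5 Hg q1 q3 q1 => a6.
getc5 Hg q0 q4 q2 => a7; getc5 Hg q1 q3 q2 => a8.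
rewrite -a5 -a6 !mulr0 addr0 in a7.
rewrite -a3 -a4 !mulr0 addr0 in a8.
by rewrite -a1 -a2 -a3 -a4 -a5 -a6 -a7 -a8.
Qed.

Lemma aut5_Gunit (R : comUnitRingType) (g : 'M[R]_5) : is_aut (sc5 R) g -> Gpart g \in unitmx.
Proof.
move=> Hg; have Hh := is_aut_inv Hg; have [gu _] := Hg.
have [z1 [z2 [z3 [z4 [z5 [z6 [z7 z8]]]]]]] := aut5_zero Hg.
have gh : g *m invmx g = 1%:M := mulmxV gu.
suff : Gpart g *m Gpart (invmx g) = 1%:M by case/mulmx1_unit.
apply/matrixP => i j; have := congr1 (fun M : 'M[R]_5 => M (m5 i) (m5 j)) gh.
rewrite !mxE sum5 sum2 !mxE; move: i j; apply: ord2_cases; apply: ord2_cases;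
  rewrite /= ?z3 ?z4 ?z5 ?z6 ?z7 ?z8; simpc; by [].
Qed.

Definition mk5e (R : nzRingType) (z0 z1 g00 g01 g10 g11 e : R) (i j : nat) : R :=
  let al := e * g00 ^+ 2 in let be := e * g01 ^+ 2 in let ga := e * g10 ^+ 2 in
  let de := e * g11 ^+ 2 in let a := e * (g00 * g01) in let b := e * (g10 * g11) in
  match i, j with
  | 0,0 => al | 0,1 => be | 0,2 => a | 0,3 => al * z1 + a * z0 | 0,4 => be * z0 + a * z1
  | 1,0 => ga | 1,1 => de | 1,2 => b | 1,3 => ga * z1 + b * z0 | 1,4 => de * z0 + b * z1
  | 2,2 => 1 | 2,3 => z0 | 2,4 => z1 | 3,3 => g00 | 3,4 => g01 | 4,3 => g10 | 4,4 => g11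
  | _,_ => 0 end.
Definition mkg5s (R : nzRingType) (z0 z1 g00 g01 g10 g11 e : R) : 'M[R]_5 :=
  \matrix_(i < 5, j < 5) mk5e z0 z1 g00 g01 g10 g11 e i j.
Definition mkg5 (R : comUnitRingType) (z : 'rV[R]_2) (G : 'M[R]_2) : 'M[R]_5 :=
  mkg5s (z 0 t0) (z 0 t1) (G t0 t0) (G t0 t1) (G t1 t0) (G t1 t1) (\det G)^-1.

Lemma aut5_char (R : comUnitRingType) (h2 : (2%:R : R) = 0) (g : 'M[R]_5) :
  is_aut (sc5 R) g -> Gpart g \in unitmx /\ g = mkg5 (zpart g) (Gpart g).
Proof.
move=> Hg; have Gu := aut5_Gunit Hg; split => //.
have [z1 [z2 [z3 [z4 [z5 [z6 [z7 z8]]]]]]] := aut5_zero Hg.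
getc5 Hg q0 q3 q3; rewrite z3 z5; simpc => pm1.
getc5 Hg q0 q3 q4; rewrite z4 z5; simpc => pm2.
getc5 Hg q0 q4 q3; rewrite z6 z8; simpc => pn1.
getc5 Hg q0 q4 q4; rewrite z7 z8; simpc => pn2.
getc5 Hg q1 q3 q3; rewrite z3 z5; simpc => qm1.
getc5 Hg q1 q3 q4; rewrite z4 z5; simpc => qm2.
getc5 Hg q1 q4 q3; rewrite z6 z8; simpc => qn1.
getc5 Hg q1 q4 q4; rewrite z7 z8; simpc => qn2.
getc5 Hg q2 q3 q3; rewrite z1 z3 z5; simpc => sm1.
getc5 Hg q2 q3 q4; rewrite z2 z4 z5; simpc => sm2.
getc5 Hg q0 q2 q3; rewrite z1; simpc => ps1.
getc5 Hg q0 q2 q4; rewrite z2; simpc => ps2.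
getc5 Hg q1 q2 q3; rewrite z1; simpc => qs1.
getc5 Hg q1 q2 q4; rewrite z2; simpc => qs2.
have hD : \det (Gpart g) = g q3 q3 * g q4 q4 - g q3 q4 * g q4 q3 by rewrite det2 !mxE.
set e := (\det (Gpart g))^-1.
have eD : e * (g q3 q3 * g q4 q4 - g q3 q4 * g q4 q3) = 1.
  by rewrite -hD /e mulVr // -unitmxE.
have hs : g q2 q2 = 1.
  apply/eqP; rewrite -subr_eq0; apply/eqP.
  rewrite -(mulr0 e); apply: (solveD eD).
  apply: (combA (k1 := g q4 q4) (k2 := - g q4 q3)
           (r := - (g q3 q3 * g q4 q4) + g q3 q4 * g q4 q3) sm1 sm2); ring.
have hal : g q0 q0 = e * g q3 q3 ^+ 2.
  apply: (solveD eD); apply: (combA (k1 := g q3 q3) (k2 := - g q4 q3) (r := 0) pn1 pm1); ring.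
have hbe : g q0 q1 = e * g q3 q4 ^+ 2.
  apply: (solveD eD); apply: (combA (k1 := g q4 q4) (k2 := - g q3 q4) (r := 0) pm2 pn2); first by ring.
  by apply: (c2E h2 (W := - g q3 q4 ^+ 2)); ring.
have ha : g q0 q2 = e * (g q3 q3 * g q3 q4).
  apply: (solveD eD); apply: (combA (k1 := g q3 q3) (k2 := - g q4 q3) (r := 0) pn2 pm2); ring.
have hga : g q1 q0 = e * g q4 q3 ^+ 2.
  apply: (solveD eD); apply: (combA (k1 := g q3 q3) (k2 := - g q4 q3) (r := 0) qn1 qm1); first by ring.
  by apply: (c2E h2 (W := - g q4 q3 ^+ 2)); ring.
have hde : g q1 q1 = e * g q4 q4 ^+ 2.
  apply: (solveD eD); apply: (combA (k1 := g q4 q4) (k2 := - g q3 q4) (r := 0) qm2 qn2); ring.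
have hb : g q1 q2 = e * (g q4 q3 * g q4 q4).
  apply: (solveD eD); apply: (combA (k1 := g q3 q3) (k2 := - g q4 q3) (r := 0) qn2 qm2); first by ring.
  by apply: (c2E h2 (W := - (g q4 q3 * g q4 q4))); ring.
rewrite hs mulr1 in ps1 ps2 qs1 qs2.
have hx1 : g q0 q3 = e * g q3 q3 ^+ 2 * g q2 q4 + e * (g q3 q3 * g q3 q4) * g q2 q3.
  rewrite -hal -ha; apply: (combA (k1 := 1) (k2 := 0) (r := - (g q0 q0 * g q2 q4 + g q0 q2 * g q2 q3)) ps1 (erefl 0)); first by ring.
  by apply: (c2E h2 (W := - (g q0 q0 * g q2 q4 + g q0 q2 * g q2 q3))); ring.
have hx2 : g q0 q4 = e * g q3 q4 ^+ 2 * g q2 q3 + e * (g q3 q3 * g q3 q4) * g q2 q4.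
  rewrite -hbe -ha; apply: (combA (k1 := 1) (k2 := 0) (r := - (g q0 q1 * g q2 q3 + g q0 q2 * g q2 q4)) ps2 (erefl 0)); first by ring.
  by apply: (c2E h2 (W := - (g q0 q1 * g q2 q3 + g q0 q2 * g q2 q4))); ring.
have hy1 : g q1 q3 = e * g q4 q3 ^+ 2 * g q2 q4 + e * (g q4 q3 * g q4 q4) * g q2 q3.
  rewrite -hga -hb; apply: (combA (k1 := 1) (k2 := 0) (r := - (g q1 q0 * g q2 q4 + g q1 q2 * g q2 q3)) qs1 (erefl 0)); first by ring.
  by apply: (c2E h2 (W := - (g q1 q0 * g q2 q4 + g q1 q2 * g q2 q3))); ring.
have hy2 : g q1 q4 = e * g q4 q4 ^+ 2 * g q2 q3 + e * (g q4 q3 * g q4 q4) * g q2 q4.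
  rewrite -hde -hb; apply: (combA (k1 := 1) (k2 := 0) (r := - (g q1 q1 * g q2 q3 + g q1 q2 * g q2 q4)) qs2 (erefl 0)); first by ring.
  by apply: (c2E h2 (W := - (g q1 q1 * g q2 q3 + g q1 q2 * g q2 q4))); ring.
apply/matrixP => i j; rewrite /mkg5 /mkg5s /zpart /Gpart !mxE /= -/e.
move: i j; apply: ord5_cases; apply: ord5_cases => /=;
  first [ by [] | by rewrite hal | by rewrite hbe | by rewrite ha | by rewrite hga
        | by rewrite hde | by rewrite hb | by rewrite hx1 | by rewrite hx2 | by rewrite hy1
        | by rewrite hy2 | by rewrite hs | by rewrite z1 | by rewrite z2 | by rewrite z3
        | by rewrite z4 | by rewrite z5 | by rewrite z6 | by rewrite z7 | by rewrite z8 ].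
Qed.

Lemma mkg5s_rows (R : comUnitRingType) (h2 : (2%:R : R) = 0) (z0 z1 g00 g01 g10 g11 e : R) :
  e * (g00 * g11 - g01 * g10) = 1 ->
  forall i j, mul5 (row i (mkg5s z0 z1 g00 g01 g10 g11 e)) (row j (mkg5s z0 z1 g00 g01 g10 g11 e))
            = tab5 R i j *m mkg5s z0 z1 g00 g01 g10 g11 e.
Proof.
move=> eD i j; apply/rowP => k; move: i j k.
apply: ord5_cases; apply: ord5_cases; apply: ord5_cases;
  rewrite /mul5 /tab5 /= ?erowM ?mul0mx !mxE /=.
by ring.
by ring.
by apply: (c2E1 h2 eD (W := (e ^+ 2 * g00 ^+ 2 * g01 ^+ 2)) (V := 0)); ring.
by apply: (c2E1 h2 eD (W := (2%:R * e ^+ 2 * g00 ^+ 2 * g01 ^+ 2 * z0 + 2%:R * e ^+ 2 * g00 ^+ 3 * g01 * z1)) (V := 0)); ring.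
by apply: (c2E1 h2 eD (W := (2%:R * e ^+ 2 * g00 * g01 ^+ 3 * z0 + 2%:R * e ^+ 2 * g00 ^+ 2 * g01 ^+ 2 * z1)) (V := 0)); ring.
by ring.
by ring.
by apply: (c2E1 h2 eD (W := (e * g01 * g10 + e ^+ 2 * g01 ^+ 2 * g10 ^+ 2)) (V := (1%:R + e * g00 * g11 + e * g01 * g10))); ring.
by apply: (c2E1 h2 eD (W := (e * g01 * g10 * z0 + e ^+ 2 * g00 * g01 * g10 * g11 * z0 + e ^+ 2 * g00 * g01 * g10 ^+ 2 * z1 + e ^+ 2 * g00 ^+ 2 * g10 * g11 * z1 + e ^+ 2 * g01 ^+ 2 * g10 ^+ 2 * z0)) (V := (e * g00 * g11 * z0 + e * g01 * g10 * z0 + z0))); ring.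
by apply: (c2E1 h2 eD (W := (e * g01 * g10 * z1 + e ^+ 2 * g00 * g01 * g10 * g11 * z1 + e ^+ 2 * g00 * g01 * g11 ^+ 2 * z0 + e ^+ 2 * g01 ^+ 2 * g10 * g11 * z0 + e ^+ 2 * g01 ^+ 2 * g10 ^+ 2 * z1)) (V := (e * g00 * g11 * z1 + e * g01 * g10 * z1 + z1))); ring.
by ring.
by ring.
by ring.
by apply: (c2E1 h2 eD (W := (e * g00 * g01 * z0 + e * g00 ^+ 2 * z1)) (V := 0)); ring.
by apply: (c2E1 h2 eD (W := (e * g00 * g01 * z1 + e * g01 ^+ 2 * z0)) (V := 0)); ring.
by ring.
by ring.
by ring.
by apply: (c2E1 h2 eD (W := (e * g00 ^+ 2 * g01)) (V := 0)); ring.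
by apply: (c2E1 h2 eD (W := (e * g00 * g01 ^+ 2)) (V := 0)); ring.
by ring.
by ring.
by ring.
by apply: (c2E1 h2 eD (W := (e * g00 * g01 * g10)) (V := (g00))); ring.
by apply: (c2E1 h2 eD (W := (e * g01 ^+ 2 * g10)) (V := (g01))); ring.
by ring.
by ring.
by apply: (c2E1 h2 eD (W := (e * g01 * g10 + e ^+ 2 * g01 ^+ 2 * g10 ^+ 2)) (V := (1%:R + e * g00 * g11 + e * g01 * g10))); ring.
by apply: (c2E1 h2 eD (W := (e * g01 * g10 * z0 + e ^+ 2 * g00 * g01 * g10 * g11 * z0 + e ^+ 2 * g00 * g01 * g10 ^+ 2 * z1 + e ^+ 2 * g00 ^+ 2 * g10 * g11 * z1 + e ^+ 2 * g01 ^+ 2 * g10 ^+ 2 * z0)) (V := (e * g00 * g11 * z0 + e * g01 * g10 * z0 + z0))); ring.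
by apply: (c2E1 h2 eD (W := (e * g01 * g10 * z1 + e ^+ 2 * g00 * g01 * g10 * g11 * z1 + e ^+ 2 * g00 * g01 * g11 ^+ 2 * z0 + e ^+ 2 * g01 ^+ 2 * g10 * g11 * z0 + e ^+ 2 * g01 ^+ 2 * g10 ^+ 2 * z1)) (V := (e * g00 * g11 * z1 + e * g01 * g10 * z1 + z1))); ring.
by ring.
by ring.
by apply: (c2E1 h2 eD (W := (e ^+ 2 * g10 ^+ 2 * g11 ^+ 2)) (V := 0)); ring.
by apply: (c2E1 h2 eD (W := (2%:R * e ^+ 2 * g10 ^+ 2 * g11 ^+ 2 * z0 + 2%:R * e ^+ 2 * g10 ^+ 3 * g11 * z1)) (V := 0)); ring.
by apply: (c2E1 h2 eD (W := (2%:R * e ^+ 2 * g10 * g11 ^+ 3 * z0 + 2%:R * e ^+ 2 * g10 ^+ 2 * g11 ^+ 2 * z1)) (V := 0)); ring.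
by ring.
by ring.
by ring.
by apply: (c2E1 h2 eD (W := (e * g10 * g11 * z0 + e * g10 ^+ 2 * z1)) (V := 0)); ring.
by apply: (c2E1 h2 eD (W := (e * g10 * g11 * z1 + e * g11 ^+ 2 * z0)) (V := 0)); ring.
by ring.
by ring.
by ring.
by apply: (c2E1 h2 eD (W := (e * g01 * g10 ^+ 2)) (V := (g10))); ring.
by apply: (c2E1 h2 eD (W := (e * g01 * g10 * g11)) (V := (g11))); ring.
by ring.
by ring.
by ring.
by apply: (c2E1 h2 eD (W := (e * g10 ^+ 2 * g11)) (V := 0)); ring.
by apply: (c2E1 h2 eD (W := (e * g10 * g11 ^+ 2)) (V := 0)); ring.
by ring.
by ring.
by ring.
by apply: (c2E1 h2 eD (W := (e * g00 * g01 * z0 + e * g00 ^+ 2 * z1)) (V := 0)); ring.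
by apply: (c2E1 h2 eD (W := (e * g00 * g01 * z1 + e * g01 ^+ 2 * z0)) (V := 0)); ring.
by ring.
by ring.
by ring.
by apply: (c2E1 h2 eD (W := (e * g10 * g11 * z0 + e * g10 ^+ 2 * z1)) (V := 0)); ring.
by apply: (c2E1 h2 eD (W := (e * g10 * g11 * z1 + e * g11 ^+ 2 * z0)) (V := 0)); ring.
by ring.
by ring.
by ring.
by apply: (c2E1 h2 eD (W := (z0)) (V := 0)); ring.
by apply: (c2E1 h2 eD (W := (z1)) (V := 0)); ring.
by ring.
by ring.
by ring.
by ring.
by ring.
by ring.
by ring.
by ring.
by ring.
by ring.
by ring.
by ring.
by ring.
by apply: (c2E1 h2 eD (W := (e * g00 ^+ 2 * g01)) (V := 0)); ring.
by apply: (c2E1 h2 eD (W := (e * g00 * g01 ^+ 2)) (V := 0)); ring.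
by ring.
by ring.
by ring.
by apply: (c2E1 h2 eD (W := (e * g01 * g10 ^+ 2)) (V := (g10))); ring.
by apply: (c2E1 h2 eD (W := (e * g01 * g10 * g11)) (V := (g11))); ring.
by ring.
by ring.
by ring.
by ring.
by ring.
by ring.
by ring.
by ring.
by ring.
by ring.
by ring.
by ring.
by ring.
by ring.
by ring.
by ring.
by ring.
by ring.
by apply: (c2E1 h2 eD (W := (e * g00 * g01 * g10)) (V := (g00))); ring.
by apply: (c2E1 h2 eD (W := (e * g01 ^+ 2 * g10)) (V := (g01))); ring.
by ring.
by ring.
by ring.
by apply: (c2E1 h2 eD (W := (e * g10 ^+ 2 * g11)) (V := 0)); ring.
by apply: (c2E1 h2 eD (W := (e * g10 * g11 ^+ 2)) (V := 0)); ring.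
by ring.
by ring.
by ring.
by ring.
by ring.
by ring.
by ring.
by ring.
by ring.
by ring.
by ring.
by ring.
by ring.
by ring.
by ring.
Qed.

Lemma mkg5s_unit (R : comUnitRingType) (h2 : (2%:R : R) = 0) (z0 z1 g00 g01 g10 g11 e : R) :
  e * (g00 * g11 - g01 * g10) = 1 -> mkg5s z0 z1 g00 g01 g10 g11 e \in unitmx.
Proof.
move=> eD.
have : mkg5s z0 z1 g00 g01 g10 g11 e *m
  mkg5s (z0 * (e * g11) + z1 * (e * g10)) (z0 * (e * g01) + z1 * (e * g00))
        (e * g11) (e * g01) (e * g10) (e * g00) (g00 * g11 - g01 * g10) = 1%:M.
  apply/matrixP; apply: ord5_cases; apply: ord5_cases; rewrite !mxE sum5 !mxE /=.
by apply: (c2E1 h2 eD (W := (e * g01 * g10 + e ^+ 2 * g01 ^+ 2 * g10 ^+ 2)) (V := (1%:R + e * g00 * g11 + e * g01 * g10 + e ^+ 2 * g00 ^+ 2 * g11 ^+ 2 + e ^+ 2 * g01 ^+ 2 * g10 ^+ 2))); ring.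
by apply: (c2E1 h2 eD (W := (- e ^+ 3 * g00 ^+ 2 * g01 ^+ 3 * g10 + e ^+ 3 * g00 ^+ 3 * g01 ^+ 2 * g11)) (V := 0)); ring.
by apply: (c2E1 h2 eD (W := (e * g00 * g01 + e ^+ 2 * g00 * g01 ^+ 2 * g10)) (V := (e * g00 * g01 + e ^+ 2 * g00 * g01 ^+ 2 * g10 + e ^+ 2 * g00 ^+ 2 * g01 * g11))); ring.
by apply: (c2E1 h2 eD (W := (e ^+ 2 * g00 * g01 * g10 * z1 + e ^+ 2 * g00 * g01 * g11 * z0 + e ^+ 2 * g00 ^+ 2 * g11 * z1 + e ^+ 2 * g01 ^+ 2 * g10 * z0 + e ^+ 3 * g00 ^+ 2 * g01 * g10 * g11 * z1 + e ^+ 3 * g01 ^+ 3 * g10 ^+ 2 * z0 - e ^+ 4 * g00 * g01 ^+ 3 * g10 ^+ 3 * z1 - e ^+ 4 * g00 ^+ 2 * g01 ^+ 2 * g10 * g11 ^+ 2 * z0 + e ^+ 4 * g00 ^+ 2 * g01 ^+ 2 * g10 ^+ 2 * g11 * z1 + e ^+ 4 * g00 ^+ 3 * g01 * g11 ^+ 3 * z0)) (V := (e ^+ 2 * g00 ^+ 2 * g11 * z1 + e ^+ 2 * g01 ^+ 2 * g10 * z0 + e ^+ 3 * g00 * g01 ^+ 2 * g10 * g11 * z0 + e ^+ 3 * g00 ^+ 2 * g01 * g10 * g11 * z1 + e ^+ 3 * g00 ^+ 3 * g11 ^+ 2 * z1 + e ^+ 3 * g01 ^+ 3 * g10 ^+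 2 * z0))); ring.
by apply: (c2E1 h2 eD (W := (2%:R * e ^+ 2 * g00 * g01 ^+ 2 * z0 + 2%:R * e ^+ 2 * g00 ^+ 2 * g01 * z1 + e ^+ 3 * g00 * g01 ^+ 3 * g10 * z0 + e ^+ 3 * g00 ^+ 2 * g01 ^+ 2 * g10 * z1 - e ^+ 4 * g00 ^+ 2 * g01 ^+ 3 * g10 * g11 * z0 - e ^+ 4 * g00 ^+ 2 * g01 ^+ 3 * g10 ^+ 2 * z1 + e ^+ 4 * g00 ^+ 3 * g01 ^+ 2 * g10 * g11 * z1 + e ^+ 4 * g00 ^+ 3 * g01 ^+ 2 * g11 ^+ 2 * z0)) (V := (e ^+ 2 * g00 * g01 ^+ 2 * z0 + e ^+ 2 * g00 ^+ 2 * g01 * z1 + e ^+ 3 * g00 * g01 ^+ 3 * g10 * z0 + e ^+ 3 * g00 ^+ 2 * g01 ^+ 2 * g10 * z1 + e ^+ 3 * g00 ^+ 2 * g01 ^+ 2 * g11 * z0 + e ^+ 3 * g00 ^+ 3 * g01 * g11 * z1))); ring.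
by apply: (c2E1 h2 eD (W := (e ^+ 3 * g00 * g10 ^+ 2 * g11 ^+ 3 - e ^+ 3 * g01 * g10 ^+ 3 * g11 ^+ 2)) (V := 0)); ring.
by apply: (c2E1 h2 eD (W := (e * g01 * g10 + e ^+ 2 * g01 ^+ 2 * g10 ^+ 2)) (V := (1%:R + e * g00 * g11 + e * g01 * g10 + e ^+ 2 * g00 ^+ 2 * g11 ^+ 2 + e ^+ 2 * g01 ^+ 2 * g10 ^+ 2))); ring.
by apply: (c2E1 h2 eD (W := (e * g10 * g11 + e ^+ 2 * g01 * g10 ^+ 2 * g11)) (V := (e * g10 * g11 + e ^+ 2 * g00 * g10 * g11 ^+ 2 + e ^+ 2 * g01 * g10 ^+ 2 * g11))); ring.
by apply: (c2E1 h2 eD (W := (2%:R * e ^+ 2 * g10 * g11 ^+ 2 * z0 + 2%:R * e ^+ 2 * g10 ^+ 2 * g11 * z1 + e ^+ 3 * g01 * g10 ^+ 2 * g11 ^+ 2 * z0 + e ^+ 3 * g01 * g10 ^+ 3 * g11 * z1 + e ^+ 4 * g00 * g01 * g10 ^+ 2 * g11 ^+ 3 * z0 - e ^+ 4 * g00 * g01 * g10 ^+ 3 * g11 ^+ 2 * z1 + e ^+ 4 * g00 ^+ 2 * g10 ^+ 2 * g11 ^+ 3 * z1 - e ^+ 4 * g01 ^+ 2 * g10 ^+ 3 * g11 ^+ 2 * z0)) (V := (e ^+ 2 * g10 * g11 ^+ 2 * z0 + e ^+ 2 * g10 ^+ 2 * g11 * z1 + e ^+ 3 * g00 * g10 * g11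 ^+ 3 * z0 + e ^+ 3 * g00 * g10 ^+ 2 * g11 ^+ 2 * z1 + e ^+ 3 * g01 * g10 ^+ 2 * g11 ^+ 2 * z0 + e ^+ 3 * g01 * g10 ^+ 3 * g11 * z1))); ring.
by apply: (c2E1 h2 eD (W := (e ^+ 2 * g00 * g10 * g11 * z1 + e ^+ 2 * g00 * g11 ^+ 2 * z0 + e ^+ 2 * g01 * g10 * g11 * z0 + e ^+ 2 * g01 * g10 ^+ 2 * z1 + e ^+ 3 * g00 * g01 * g10 * g11 ^+ 2 * z0 + e ^+ 3 * g01 ^+ 2 * g10 ^+ 3 * z1 + e ^+ 4 * g00 * g01 ^+ 2 * g10 ^+ 2 * g11 ^+ 2 * z0 - e ^+ 4 * g00 ^+ 2 * g01 * g10 ^+ 2 * g11 ^+ 2 * z1 + e ^+ 4 * g00 ^+ 3 * g10 * g11 ^+ 3 * z1 - e ^+ 4 * g01 ^+ 3 * g10 ^+ 3 * g11 * z0)) (V := (e ^+ 2 * g00 * g11 ^+ 2 * z0 + e ^+ 2 * g01 * g10 ^+ 2 * z1 + e ^+ 3 * g00 * g01 * g10 * g11 ^+ 2 * z0 + e ^+ 3 * g00 * g01 * g10 ^+ 2 * g11 * z1 + e ^+ 3 * g00 ^+ 2 * g11 ^+ 3 * z0 + e ^+ 3 * g01 ^+ 2 * g10 ^+ 3 * z1))); ring.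
by ring.
by ring.
by ring.
by apply: (c2E1 h2 eD (W := (e * g10 * z1 + e * g11 * z0)) (V := 0)); ring.
by apply: (c2E1 h2 eD (W := (e * g00 * z1 + e * g01 * z0)) (V := 0)); ring.
by ring.
by ring.
by ring.
by apply: (c2E1 h2 eD (W := (e * g01 * g10)) (V := (1%:R))); ring.
by apply: (c2E1 h2 eD (W := (e * g00 * g01)) (V := 0)); ring.
by ring.
by ring.
by ring.
by apply: (c2E1 h2 eD (W := (e * g10 * g11)) (V := 0)); ring.
by apply: (c2E1 h2 eD (W := (e * g01 * g10)) (V := (1%:R))); ring.
by case/mulmx1_unit.
Qed.

Definition m6 (j : 'I_2) : 'I_6 := if val j == 0%N then o3 else o4.
Definition f6 (j : 'I_2) : 'I_6 := if val j == 0%N then o0 else o1.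
Definition zpart6 (R : nzRingType) (g : 'M[R]_6) : 'rV[R]_2 := \row_(j < 2) g o2 (m6 j).
Definition Gpart6 (R : nzRingType) (g : 'M[R]_6) : 'M[R]_2 := \matrix_(i < 2, j < 2) g (m6 i) (m6 j).
Definition fpart6 (R : nzRingType) (g : 'M[R]_6) : 'rV[R]_2 := \row_(j < 2) g (f6 j) o5.

Lemma aut6_coord (R : comUnitRingType) (g : 'M[R]_6) : is_aut (sc6 R) g ->
  forall i j k, (mul6 (row i g) (row j g)) 0 k = (tab6 R i j *m g) 0 k.
Proof. by move=> Hg i j k; rewrite -scmul6 -sc6_tab (is_aut_rows Hg). Qed.

Ltac getc6 Hg i j k := have := aut6_coord Hg i j k; rewrite /mul6 /tab6 /= ?erowM ?mul0mx !mxE /=.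

Lemma aut6_zero (R : comUnitRingType) (g : 'M[R]_6) : is_aut (sc6 R) g ->
  g o2 o0 = 0 /\ g o2 o1 = 0 /\ g o3 o0 = 0 /\ g o3 o1 = 0 /\ g o3 o2 = 0 /\
  g o4 o0 = 0 /\ g o4 o1 = 0 /\ g o4 o2 = 0 /\ g o2 o5 = 0 /\ g o3 o5 = 0 /\ g o4 o5 = 0.
Proof.
move=> Hg.
getc6 Hg o0 o1 o0 => a1; getc6 Hg o0 o1 o1 => a2.
getc6 Hg o0 o4 o0 => a3; getc6 Hg o0 o4 o1 => a4.
getc6 Hg o1 o3 o0 => a5; getc6 Hg o1 o3 o1 => a6.
getc6 Hg o0 o4 o2 => a7; getc6 Hg o1 o3 o2 => a8.
getc6 Hg o0 o1 o5 => a9; getc6 Hg o0 o4 o5 => a10; getc6 Hg o1 o3 o5 => a11.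
rewrite -a5 -a6 !mulr0 addr0 in a7.
rewrite -a3 -a4 !mulr0 addr0 in a8.
by rewrite -a1 -a2 -a3 -a4 -a5 -a6 -a7 -a8 -a9 -a10 -a11.
Qed.

Lemma aut6_Gunit (R : comUnitRingType) (g : 'M[R]_6) : is_aut (sc6 R) g -> Gpart6 g \in unitmx.
Proof.
move=> Hg; have Hh := is_aut_inv Hg; have [gu _] := Hg.
have [z1 [z2 [z3 [z4 [z5 [z6 [z7 [z8 [z9 [z10 z11]]]]]]]]]] := aut6_zero Hg.
have gh : g *m invmx g = 1%:M := mulmxV gu.
suff : Gpart6 g *m Gpart6 (invmx g) = 1%:M by case/mulmx1_unit.
apply/matrixP => i j; have := congr1 (fun M : 'M[R]_6 => M (m6 i) (m6 j)) gh.
rewrite !mxE sum6 sum2 !mxE; move: i j; apply: ord2_cases; apply: ord2_cases;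
  rewrite /= ?z3 ?z4 ?z5 ?z6 ?z7 ?z8 ?z10 ?z11; simpc; by [].
Qed.

Definition mk6e (R : nzRingType) (z0 z1 g00 g01 g10 g11 e f0 f1 t : R) (i j : nat) : R :=
  if ((i < 5) && (j < 5))%N then mk5e z0 z1 g00 g01 g10 g11 e i j else
  match i, j with | 0,5 => f0 | 1,5 => f1 | 5,5 => t | _,_ => 0 end.
Definition mkg6s (R : nzRingType) (z0 z1 g00 g01 g10 g11 e f0 f1 t : R) : 'M[R]_6 :=
  \matrix_(i < 6, j < 6) mk6e z0 z1 g00 g01 g10 g11 e f0 f1 t i j.
Definition mkg6 (R : comUnitRingType) (z : 'rV[R]_2) (G : 'M[R]_2) (f : 'rV[R]_2) (t : R) : 'M[R]_6 :=
  mkg6s (z 0 t0) (z 0 t1) (G t0 t0) (G t0 t1) (G t1 t0) (G t1 t1) (\det G)^-1 (f 0 t0) (f 0 t1) t.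

Lemma aut6_char (R : comUnitRingType) (h2 : (2%:R : R) = 0) (g : 'M[R]_6) :
  is_aut (sc6 R) g ->
  [/\ Gpart6 g \in unitmx, g o5 o5 \is a GRing.unit &
      g = mkg6 (zpart6 g) (Gpart6 g) (fpart6 g) (g o5 o5)].
Proof.
move=> Hg; have Gu := aut6_Gunit Hg.
have [z1 [z2 [z3 [z4 [z5 [z6 [z7 [z8 [z9 [z10 z11]]]]]]]]]] := aut6_zero Hg.
getc6 Hg o0 o3 o3; rewrite z3 z5; simpc => pm1.
getc6 Hg o0 o3 o4; rewrite z4 z5; simpc => pm2.
getc6 Hg o0 o4 o3; rewrite z6 z8; simpc => pn1.
getc6 Hg o0 o4 o4; rewrite z7 z8; simpc => pn2.
getc6 Hg o1 o3 o3; rewrite z3 z5; simpc => qm1.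
getc6 Hg o1 o3 o4; rewrite z4 z5; simpc => qm2.
getc6 Hg o1 o4 o3; rewrite z6 z8; simpc => qn1.
getc6 Hg o1 o4 o4; rewrite z7 z8; simpc => qn2.
getc6 Hg o2 o3 o3; rewrite z1 z3 z5; simpc => sm1.
getc6 Hg o2 o3 o4; rewrite z2 z4 z5; simpc => sm2.
getc6 Hg o0 o2 o3; rewrite z1; simpc => ps1.
getc6 Hg o0 o2 o4; rewrite z2; simpc => ps2.
getc6 Hg o1 o2 o3; rewrite z1; simpc => qs1.
getc6 Hg o1 o2 o4; rewrite z2; simpc => qs2.
getc6 Hg o5 o3 o3; rewrite z3 z5; simpc => r1.
getc6 Hg o5 o3 o4; rewrite z4 z5; simpc => r2.
getc6 Hg o5 o4 o3; rewrite z6 z8; simpc => r3.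
getc6 Hg o5 o4 o4; rewrite z7 z8; simpc => r4.
getc6 Hg o5 o2 o3; rewrite z1; simpc => r5.
getc6 Hg o5 o2 o4; rewrite z2; simpc => r6.
have hD : \det (Gpart6 g) = g o3 o3 * g o4 o4 - g o3 o4 * g o4 o3 by rewrite det2 !mxE.
set e := (\det (Gpart6 g))^-1.
have eD : e * (g o3 o3 * g o4 o4 - g o3 o4 * g o4 o3) = 1.
  by rewrite -hD /e mulVr // -unitmxE.
have hs : g o2 o2 = 1.
  apply/eqP; rewrite -subr_eq0; apply/eqP.
  rewrite -(mulr0 e); apply: (solveD eD).
  apply: (combA (k1 := g o4 o4) (k2 := - g o4 o3)
           (r := - (g o3 o3 * g o4 o4) + g o3 o4 * g o4 o3) sm1 sm2); ring.
have h50 : g o5 o0 = 0.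
  rewrite -(mulr0 e); apply: (solveD eD).
  by apply: (combA (k1 := g o3 o3) (k2 := - g o4 o3) (r := 0) r3 r1); ring.
have h52 : g o5 o2 = 0.
  rewrite -(mulr0 e); apply: (solveD eD).
  by apply: (combA (k1 := g o4 o4) (k2 := - g o3 o4) (r := 0) r1 r3); ring.
have h51 : g o5 o1 = 0.
  rewrite -(mulr0 e); apply: (solveD eD).
  by apply: (combA (k1 := g o4 o4) (k2 := - g o3 o4) (r := 0) r2 r4); ring.
have h53 : g o5 o3 = 0 by move: r5; rewrite h50 h52 hs; simpc.
have h54 : g o5 o4 = 0 by move: r6; rewrite h51 h52 hs; simpc.
have tU : g o5 o5 \is a GRing.unit.
  have [gu _] := Hg; have := congr1 (fun M : 'M[R]_6 => M o5 o5) (mulmxV gu).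
  rewrite !mxE sum6 h50 h51 h52 h53 h54 /=; simpc => H.
  by apply/unitrPr; exists (invmx g o5 o5).
split => //.
have hal : g o0 o0 = e * g o3 o3 ^+ 2.
  apply: (solveD eD); apply: (combA (k1 := g o3 o3) (k2 := - g o4 o3) (r := 0) pn1 pm1); ring.
have hbe : g o0 o1 = e * g o3 o4 ^+ 2.
  apply: (solveD eD); apply: (combA (k1 := g o4 o4) (k2 := - g o3 o4) (r := 0) pm2 pn2); first by ring.
  by apply: (c2E h2 (W := - g o3 o4 ^+ 2)); ring.
have ha : g o0 o2 = e * (g o3 o3 * g o3 o4).
  apply: (solveD eD); apply: (combA (k1 := g o3 o3) (k2 := - g o4 o3) (r := 0) pn2 pm2); ring.
have hga : g o1 o0 = e * g o4 o3 ^+ 2.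
  apply: (solveD eD); apply: (combA (k1 := g o3 o3) (k2 := - g o4 o3) (r := 0) qn1 qm1); first by ring.
  by apply: (c2E h2 (W := - g o4 o3 ^+ 2)); ring.
have hde : g o1 o1 = e * g o4 o4 ^+ 2.
  apply: (solveD eD); apply: (combA (k1 := g o4 o4) (k2 := - g o3 o4) (r := 0) qm2 qn2); ring.
have hb : g o1 o2 = e * (g o4 o3 * g o4 o4).
  apply: (solveD eD); apply: (combA (k1 := g o3 o3) (k2 := - g o4 o3) (r := 0) qn2 qm2); first by ring.
  by apply: (c2E h2 (W := - (g o4 o3 * g o4 o4))); ring.
rewrite hs mulr1 in ps1 ps2 qs1 qs2.
have hx1 : g o0 o3 = e * g o3 o3 ^+ 2 * g o2 o4 + e * (g o3 o3 * g o3 o4) * g o2 o3.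
  rewrite -hal -ha; apply: (combA (k1 := 1) (k2 := 0) (r := - (g o0 o0 * g o2 o4 + g o0 o2 * g o2 o3)) ps1 (erefl 0)); first by ring.
  by apply: (c2E h2 (W := - (g o0 o0 * g o2 o4 + g o0 o2 * g o2 o3))); ring.
have hx2 : g o0 o4 = e * g o3 o4 ^+ 2 * g o2 o3 + e * (g o3 o3 * g o3 o4) * g o2 o4.
  rewrite -hbe -ha; apply: (combA (k1 := 1) (k2 := 0) (r := - (g o0 o1 * g o2 o3 + g o0 o2 * g o2 o4)) ps2 (erefl 0)); first by ring.
  by apply: (c2E h2 (W := - (g o0 o1 * g o2 o3 + g o0 o2 * g o2 o4))); ring.
have hy1 : g o1 o3 = e * g o4 o3 ^+ 2 * g o2 o4 + e * (g o4 o3 * g o4 o4) * g o2 o3.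
  rewrite -hga -hb; apply: (combA (k1 := 1) (k2 := 0) (r := - (g o1 o0 * g o2 o4 + g o1 o2 * g o2 o3)) qs1 (erefl 0)); first by ring.
  by apply: (c2E h2 (W := - (g o1 o0 * g o2 o4 + g o1 o2 * g o2 o3))); ring.
have hy2 : g o1 o4 = e * g o4 o4 ^+ 2 * g o2 o3 + e * (g o4 o3 * g o4 o4) * g o2 o4.
  rewrite -hde -hb; apply: (combA (k1 := 1) (k2 := 0) (r := - (g o1 o1 * g o2 o3 + g o1 o2 * g o2 o4)) qs2 (erefl 0)); first by ring.
  by apply: (c2E h2 (W := - (g o1 o1 * g o2 o3 + g o1 o2 * g o2 o4))); ring.
apply/matrixP => i j; rewrite /mkg6 /mkg6s /zpart6 /Gpart6 /fpart6 !mxE /= -/e.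
move: i j; apply: ord6_cases; apply: ord6_cases => /=;
  first [ by [] | by rewrite hal | by rewrite hbe | by rewrite ha | by rewrite hga
        | by rewrite hde | by rewrite hb | by rewrite hx1 | by rewrite hx2 | by rewrite hy1
        | by rewrite hy2 | by rewrite hs | by rewrite z1 | by rewrite z2 | by rewrite z3
        | by rewrite z4 | by rewrite z5 | by rewrite z6 | by rewrite z7 | by rewrite z8
        | by rewrite z9 | by rewrite z10 | by rewrite z11 | by rewrite h50 | by rewrite h51
        | by rewrite h52 | by rewrite h53 | by rewrite h54 ].
Qed.

Lemma mkg6s_rows (R : comUnitRingType) (h2 : (2%:R : R) = 0) (z0 z1 g00 g01 g10 g11 e f0 f1 t : R) :
  e * (g00 * g11 - g01 * g10) = 1 ->
  forall i j, mul6 (row i (mkg6s z0 z1 g00 g01 g10 g11 e f0 f1 t)) (row j (mkg6s z0 z1 g00 g01 g10 g11 e f0 f1 t)) = tab6 R i j *m mkg6s z0 z1 g00 g01 g10 g11 e f0 f1 t.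
Proof.
move=> eD i j; apply/rowP => k; move: i j k.
apply: ord6_cases; apply: ord6_cases; apply: ord6_cases;
  rewrite /mul6 /tab6 /= ?erowM ?mul0mx !mxE /mk6e /mk5e /=.
by ring.
by ring.
by apply: (c2E1 h2 eD (W := (e ^+ 2 * g00 ^+ 2 * g01 ^+ 2)) (V := 0)); ring.
by apply: (c2E1 h2 eD (W := (2%:R * e ^+ 2 * g00 ^+ 2 * g01 ^+ 2 * z0 + 2%:R * e ^+ 2 * g00 ^+ 3 * g01 * z1)) (V := 0)); ring.
by apply: (c2E1 h2 eD (W := (2%:R * e ^+ 2 * g00 * g01 ^+ 3 * z0 + 2%:R * e ^+ 2 * g00 ^+ 2 * g01 ^+ 2 * z1)) (V := 0)); ring.
by ring.
by ring.
by ring.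
by apply: (c2E1 h2 eD (W := (e * g01 * g10 + e ^+ 2 * g01 ^+ 2 * g10 ^+ 2)) (V := (1%:R + e * g00 * g11 + e * g01 * g10))); ring.
by apply: (c2E1 h2 eD (W := (e * g01 * g10 * z0 + e ^+ 2 * g00 * g01 * g10 * g11 * z0 + e ^+ 2 * g00 * g01 * g10 ^+ 2 * z1 + e ^+ 2 * g00 ^+ 2 * g10 * g11 * z1 + e ^+ 2 * g01 ^+ 2 * g10 ^+ 2 * z0)) (V := (e * g00 * g11 * z0 + e * g01 * g10 * z0 + z0))); ring.
by apply: (c2E1 h2 eD (W := (e * g01 * g10 * z1 + e ^+ 2 * g00 * g01 * g10 * g11 * z1 + e ^+ 2 * g00 * g01 * g11 ^+ 2 * z0 + e ^+ 2 * g01 ^+ 2 * g10 * g11 * z0 + e ^+ 2 * g01 ^+ 2 * g10 ^+ 2 * z1)) (V := (e * g00 * g11 * z1 + e * g01 * g10 * z1 + z1))); ring.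
by ring.
by ring.
by ring.
by ring.
by apply: (c2E1 h2 eD (W := (e * g00 * g01 * z0 + e * g00 ^+ 2 * z1)) (V := 0)); ring.
by apply: (c2E1 h2 eD (W := (e * g00 * g01 * z1 + e * g01 ^+ 2 * z0)) (V := 0)); ring.
by ring.
by ring.
by ring.
by ring.
by apply: (c2E1 h2 eD (W := (e * g00 ^+ 2 * g01)) (V := 0)); ring.
by apply: (c2E1 h2 eD (W := (e * g00 * g01 ^+ 2)) (V := 0)); ring.
by ring.
by ring.
by ring.
by ring.
by apply: (c2E1 h2 eD (W := (e * g00 * g01 * g10)) (V := (g00))); ring.
by apply: (c2E1 h2 eD (W := (e * g01 ^+ 2 * g10)) (V := (g01))); ring.
by ring.
by ring.
by ring.
by ring.
by ring.
by ring.
by ring.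
by ring.
by ring.
by apply: (c2E1 h2 eD (W := (e * g01 * g10 + e ^+ 2 * g01 ^+ 2 * g10 ^+ 2)) (V := (1%:R + e * g00 * g11 + e * g01 * g10))); ring.
by apply: (c2E1 h2 eD (W := (e * g01 * g10 * z0 + e ^+ 2 * g00 * g01 * g10 * g11 * z0 + e ^+ 2 * g00 * g01 * g10 ^+ 2 * z1 + e ^+ 2 * g00 ^+ 2 * g10 * g11 * z1 + e ^+ 2 * g01 ^+ 2 * g10 ^+ 2 * z0)) (V := (e * g00 * g11 * z0 + e * g01 * g10 * z0 + z0))); ring.
by apply: (c2E1 h2 eD (W := (e * g01 * g10 * z1 + e ^+ 2 * g00 * g01 * g10 * g11 * z1 + e ^+ 2 * g00 * g01 * g11 ^+ 2 * z0 + e ^+ 2 * g01 ^+ 2 * g10 * g11 * z0 + e ^+ 2 * g01 ^+ 2 * g10 ^+ 2 * z1)) (V := (e * g00 * g11 * z1 + e * g01 * g10 * z1 + z1))); ring.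
by ring.
by ring.
by ring.
by apply: (c2E1 h2 eD (W := (e ^+ 2 * g10 ^+ 2 * g11 ^+ 2)) (V := 0)); ring.
by apply: (c2E1 h2 eD (W := (2%:R * e ^+ 2 * g10 ^+ 2 * g11 ^+ 2 * z0 + 2%:R * e ^+ 2 * g10 ^+ 3 * g11 * z1)) (V := 0)); ring.
by apply: (c2E1 h2 eD (W := (2%:R * e ^+ 2 * g10 * g11 ^+ 3 * z0 + 2%:R * e ^+ 2 * g10 ^+ 2 * g11 ^+ 2 * z1)) (V := 0)); ring.
by ring.
by ring.
by ring.
by ring.
by apply: (c2E1 h2 eD (W := (e * g10 * g11 * z0 + e * g10 ^+ 2 * z1)) (V := 0)); ring.
by apply: (c2E1 h2 eD (W := (e * g10 * g11 * z1 + e * g11 ^+ 2 * z0)) (V := 0)); ring.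
by ring.
by ring.
by ring.
by ring.
by apply: (c2E1 h2 eD (W := (e * g01 * g10 ^+ 2)) (V := (g10))); ring.
by apply: (c2E1 h2 eD (W := (e * g01 * g10 * g11)) (V := (g11))); ring.
by ring.
by ring.
by ring.
by ring.
by apply: (c2E1 h2 eD (W := (e * g10 ^+ 2 * g11)) (V := 0)); ring.
by apply: (c2E1 h2 eD (W := (e * g10 * g11 ^+ 2)) (V := 0)); ring.
by ring.
by ring.
by ring.
by ring.
by ring.
by ring.
by ring.
by ring.
by ring.
by ring.
by apply: (c2E1 h2 eD (W := (e * g00 * g01 * z0 + e * g00 ^+ 2 * z1)) (V := 0)); ring.
by apply: (c2E1 h2 eD (W := (e * g00 * g01 * z1 + e * g01 ^+ 2 * z0)) (V := 0)); ring.
by ring.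
by ring.
by ring.
by ring.
by apply: (c2E1 h2 eD (W := (e * g10 * g11 * z0 + e * g10 ^+ 2 * z1)) (V := 0)); ring.
by apply: (c2E1 h2 eD (W := (e * g10 * g11 * z1 + e * g11 ^+ 2 * z0)) (V := 0)); ring.
by ring.
by ring.
by ring.
by ring.
by apply: (c2E1 h2 eD (W := (z0)) (V := 0)); ring.
by apply: (c2E1 h2 eD (W := (z1)) (V := 0)); ring.
by ring.
by ring.
by ring.
by ring.
by ring.
by ring.
by ring.
by ring.
by ring.
by ring.
by ring.
by ring.
by ring.
by ring.
by ring.
by ring.
by ring.
by ring.
by ring.
by ring.
by ring.
by ring.
by apply: (c2E1 h2 eD (W := (e * g00 ^+ 2 * g01)) (V := 0)); ring.
by apply: (c2E1 h2 eD (W := (e * g00 * g01 ^+ 2)) (V := 0)); ring.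
by ring.
by ring.
by ring.
by ring.
by apply: (c2E1 h2 eD (W := (e * g01 * g10 ^+ 2)) (V := (g10))); ring.
by apply: (c2E1 h2 eD (W := (e * g01 * g10 * g11)) (V := (g11))); ring.
by ring.
by ring.
by ring.
by ring.
by ring.
by ring.
by ring.
by ring.
by ring.
by ring.
by ring.
by ring.
by ring.
by ring.
by ring.
by ring.
by ring.
by ring.
by ring.
by ring.
by ring.
by ring.
by ring.
by ring.
by ring.
by ring.
by ring.
by ring.
by apply: (c2E1 h2 eD (W := (e * g00 * g01 * g10)) (V := (g00))); ring.
by apply: (c2E1 h2 eD (W := (e * g01 ^+ 2 * g10)) (V := (g01))); ring.
by ring.
by ring.
by ring.
by ring.
by apply: (c2E1 h2 eD (W := (e * g10 ^+ 2 * g11)) (V := 0)); ring.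
by apply: (c2E1 h2 eD (W := (e * g10 * g11 ^+ 2)) (V := 0)); ring.
by ring.
by ring.
by ring.
by ring.
by ring.
by ring.
by ring.
by ring.
by ring.
by ring.
by ring.
by ring.
by ring.
by ring.
by ring.
by ring.
by ring.
by ring.
by ring.
by ring.
by ring.
by ring.
by ring.
by ring.
by ring.
by ring.
by ring.
by ring.
by ring.
by ring.
by ring.
by ring.
by ring.
by ring.
by ring.
by ring.
by ring.
by ring.
by ring.
by ring.
by ring.
by ring.
by ring.
by ring.
by ring.
by ring.
by ring.
by ring.
by ring.
by ring.
by ring.
by ring.
by ring.
by ring.
by ring.
by ring.
by ring.
by ring.
by ring.
by ring.
by ring.
Qed.

Lemma mkg6s_unit (R : comUnitRingType) (h2 : (2%:R : R) = 0) (z0 z1 g00 g01 g10 g11 e f0 f1 t s : R) :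
  e * (g00 * g11 - g01 * g10) = 1 -> s * t = 1 -> mkg6s z0 z1 g00 g01 g10 g11 e f0 f1 t \in unitmx.
Proof.
move=> eD eD'.
have : mkg6s z0 z1 g00 g01 g10 g11 e f0 f1 t *m
  mkg6s (z0 * (e * g11) + z1 * (e * g10)) (z0 * (e * g01) + z1 * (e * g00))
        (e * g11) (e * g01) (e * g10) (e * g00) (g00 * g11 - g01 * g10)
        (s * (e * g11 ^+ 2 * f0 + e * g01 ^+ 2 * f1)) (s * (e * g10 ^+ 2 * f0 + e * g00 ^+ 2 * f1)) s = 1%:M.
  apply/matrixP; apply: ord6_cases; apply: ord6_cases; rewrite !mxE sum6 !mxE /mk6e /mk5e /=.
by apply: (c2E2 h2 eD eD' (W := (e * g01 * g10 + e ^+ 2 * g01 ^+ 2 * g10 ^+ 2)) (V := (1%:R + e * g00 * g11 + e * g01 * g10 + e ^+ 2 * g00 ^+ 2 * g11 ^+ 2 + e ^+ 2 * g01 ^+ 2 * g10 ^+ 2)) (V' := 0)); ring.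
by apply: (c2E2 h2 eD eD' (W := (- e ^+ 3 * g00 ^+ 2 * g01 ^+ 3 * g10 + e ^+ 3 * g00 ^+ 3 * g01 ^+ 2 * g11)) (V := 0) (V' := 0)); ring.
by apply: (c2E2 h2 eD eD' (W := (e * g00 * g01 + e ^+ 2 * g00 * g01 ^+ 2 * g10)) (V := (e * g00 * g01 + e ^+ 2 * g00 * g01 ^+ 2 * g10 + e ^+ 2 * g00 ^+ 2 * g01 * g11)) (V' := 0)); ring.
by apply: (c2E2 h2 eD eD' (W := (e ^+ 2 * g00 * g01 * g10 * z1 + e ^+ 2 * g00 * g01 * g11 * z0 + e ^+ 2 * g00 ^+ 2 * g11 * z1 + e ^+ 2 * g01 ^+ 2 * g10 * z0 + e ^+ 3 * g00 ^+ 2 * g01 * g10 * g11 * z1 + e ^+ 3 * g01 ^+ 3 * g10 ^+ 2 * z0 - e ^+ 4 * g00 * g01 ^+ 3 * g10 ^+ 3 * z1 - e ^+ 4 * g00 ^+ 2 * g01 ^+ 2 * g10 * g11 ^+ 2 * z0 + e ^+ 4 * g00 ^+ 2 * g01 ^+ 2 * g10 ^+ 2 * g11 * z1 + e ^+ 4 * g00 ^+ 3 * g01 * g11 ^+ 3 * z0)) (V := (e ^+ 2 * g00 ^+ 2 * g11 * z1 + e ^+ 2 * g01 ^+ 2 * g10 * z0 + e ^+ 3 * g00 * g01 ^+ 2 * g10 * g11 * z0 + e ^+ 3 * g00 ^+ 2 * g01 * g10 * g11 * z1 + e ^+ 3 * g00 ^+ 3 * g11 ^+ 2 * z1 + e ^+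 3 * g01 ^+ 3 * g10 ^+ 2 * z0)) (V' := 0)); ring.
by apply: (c2E2 h2 eD eD' (W := (2%:R * e ^+ 2 * g00 * g01 ^+ 2 * z0 + 2%:R * e ^+ 2 * g00 ^+ 2 * g01 * z1 + e ^+ 3 * g00 * g01 ^+ 3 * g10 * z0 + e ^+ 3 * g00 ^+ 2 * g01 ^+ 2 * g10 * z1 - e ^+ 4 * g00 ^+ 2 * g01 ^+ 3 * g10 * g11 * z0 - e ^+ 4 * g00 ^+ 2 * g01 ^+ 3 * g10 ^+ 2 * z1 + e ^+ 4 * g00 ^+ 3 * g01 ^+ 2 * g10 * g11 * z1 + e ^+ 4 * g00 ^+ 3 * g01 ^+ 2 * g11 ^+ 2 * z0)) (V := (e ^+ 2 * g00 * g01 ^+ 2 * z0 + e ^+ 2 * g00 ^+ 2 * g01 * z1 + e ^+ 3 * g00 * g01 ^+ 3 * g10 * z0 + e ^+ 3 * g00 ^+ 2 * g01 ^+ 2 * g10 * z1 + e ^+ 3 * g00 ^+ 2 * g01 ^+ 2 * g11 * z0 + e ^+ 3 * g00 ^+ 3 * g01 * g11 * z1)) (V' := 0)); ring.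
by apply: (c2E2 h2 eD eD' (W := (e * f0 * g01 * g10 * s + e ^+ 2 * f0 * g01 ^+ 2 * g10 ^+ 2 * s + e ^+ 2 * f1 * g00 ^+ 2 * g01 ^+ 2 * s + f0 * s)) (V := (e * f0 * g00 * g11 * s + e * f0 * g01 * g10 * s + f0 * s)) (V' := 0)); ring.
by apply: (c2E2 h2 eD eD' (W := (e ^+ 3 * g00 * g10 ^+ 2 * g11 ^+ 3 - e ^+ 3 * g01 * g10 ^+ 3 * g11 ^+ 2)) (V := 0) (V' := 0)); ring.
by apply: (c2E2 h2 eD eD' (W := (e * g01 * g10 + e ^+ 2 * g01 ^+ 2 * g10 ^+ 2)) (V := (1%:R + e * g00 * g11 + e * g01 * g10 + e ^+ 2 * g00 ^+ 2 * g11 ^+ 2 + e ^+ 2 * g01 ^+ 2 * g10 ^+ 2)) (V' := 0)); ring.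
by apply: (c2E2 h2 eD eD' (W := (e * g10 * g11 + e ^+ 2 * g01 * g10 ^+ 2 * g11)) (V := (e * g10 * g11 + e ^+ 2 * g00 * g10 * g11 ^+ 2 + e ^+ 2 * g01 * g10 ^+ 2 * g11)) (V' := 0)); ring.
by apply: (c2E2 h2 eD eD' (W := (2%:R * e ^+ 2 * g10 * g11 ^+ 2 * z0 + 2%:R * e ^+ 2 * g10 ^+ 2 * g11 * z1 + e ^+ 3 * g01 * g10 ^+ 2 * g11 ^+ 2 * z0 + e ^+ 3 * g01 * g10 ^+ 3 * g11 * z1 + e ^+ 4 * g00 * g01 * g10 ^+ 2 * g11 ^+ 3 * z0 - e ^+ 4 * g00 * g01 * g10 ^+ 3 * g11 ^+ 2 * z1 + e ^+ 4 * g00 ^+ 2 * g10 ^+ 2 * g11 ^+ 3 * z1 - e ^+ 4 * g01 ^+ 2 * g10 ^+ 3 * g11 ^+ 2 * z0)) (V := (e ^+ 2 * g10 * g11 ^+ 2 * z0 + e ^+ 2 * g10 ^+ 2 * g11 * z1 + e ^+ 3 * g00 * g10 * g11 ^+ 3 * z0 + e ^+ 3 * g00 * g10 ^+ 2 * g11 ^+ 2 * z1 + e ^+ 3 * g01 * g10 ^+ 2 * g11 ^+ 2 * z0 + e ^+ 3 * g01 * g10 ^+ 3 * g11 * z1)) (V' := 0)); ring.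
by apply: (c2E2 h2 eD eD' (W := (e ^+ 2 * g00 * g10 * g11 * z1 + e ^+ 2 * g00 * g11 ^+ 2 * z0 + e ^+ 2 * g01 * g10 * g11 * z0 + e ^+ 2 * g01 * g10 ^+ 2 * z1 + e ^+ 3 * g00 * g01 * g10 * g11 ^+ 2 * z0 + e ^+ 3 * g01 ^+ 2 * g10 ^+ 3 * z1 + e ^+ 4 * g00 * g01 ^+ 2 * g10 ^+ 2 * g11 ^+ 2 * z0 - e ^+ 4 * g00 ^+ 2 * g01 * g10 ^+ 2 * g11 ^+ 2 * z1 + e ^+ 4 * g00 ^+ 3 * g10 * g11 ^+ 3 * z1 - e ^+ 4 * g01 ^+ 3 * g10 ^+ 3 * g11 * z0)) (V := (e ^+ 2 * g00 * g11 ^+ 2 * z0 + e ^+ 2 * g01 * g10 ^+ 2 * z1 + e ^+ 3 * g00 * g01 * g10 * g11 ^+ 2 * z0 + e ^+ 3 * g00 * g01 * g10 ^+ 2 * g11 * z1 + e ^+ 3 * g00 ^+ 2 * g11 ^+ 3 * z0 + e ^+ 3 * g01 ^+ 2 * g10 ^+ 3 * z1)) (V' := 0)); ring.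
by apply: (c2E2 h2 eD eD' (W := (e * f1 * g01 * g10 * s + e ^+ 2 * f0 * g10 ^+ 2 * g11 ^+ 2 * s + e ^+ 2 * f1 * g01 ^+ 2 * g10 ^+ 2 * s + f1 * s)) (V := (e * f1 * g00 * g11 * s + e * f1 * g01 * g10 * s + f1 * s)) (V' := 0)); ring.
by ring.
by ring.
by ring.
by apply: (c2E2 h2 eD eD' (W := (e * g10 * z1 + e * g11 * z0)) (V := 0) (V' := 0)); ring.
by apply: (c2E2 h2 eD eD' (W := (e * g00 * z1 + e * g01 * z0)) (V := 0) (V' := 0)); ring.
by ring.
by ring.
by ring.
by ring.
by apply: (c2E2 h2 eD eD' (W := (e * g01 * g10)) (V := (1%:R)) (V' := 0)); ring.
by apply: (c2E2 h2 eD eD' (W := (e * g00 * g01)) (V := 0) (V' := 0)); ring.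
by ring.
by ring.
by ring.
by ring.
by apply: (c2E2 h2 eD eD' (W := (e * g10 * g11)) (V := 0) (V' := 0)); ring.
by apply: (c2E2 h2 eD eD' (W := (e * g01 * g10)) (V := (1%:R)) (V' := 0)); ring.
by ring.
by ring.
by ring.
by ring.
by ring.
by ring.
by apply: (c2E2 h2 eD eD' (W := 0) (V := 0) (V' := (1%:R))); ring.
by case/mulmx1_unit.
Qed.


Definition bBn (i j : nat) : nat := nth 0%N (nth [::] ([:: [:: 1;0;0;0;0;0]; [:: 0;1;0;0;0;0];
  [:: 1;1;1;0;0;0]; [:: 0;1;1;0;1;1]; [:: 1;0;1;1;0;1]; [:: 1;1;1;1;1;1]])%N i) j.
Definition bBin (i j : nat) : nat := nth 0%N (nth [::] ([:: [:: 1;0;0;0;0;0]; [:: 0;1;0;0;0;0];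
  [:: 1;1;1;0;0;0]; [:: 1;0;0;1;0;1]; [:: 0;1;0;0;1;1]; [:: 1;1;1;1;1;1]])%N i) j.
Definition Bm (R : nzRingType) : 'M[R]_6 := \matrix_(i < 6, j < 6) (bBn i j)%:R.
Definition Bim (R : nzRingType) : 'M[R]_6 := \matrix_(i < 6, j < 6) (bBin i j)%:R.
Definition P0 (R : nzRingType) : 'M[R]_(6,5) := \matrix_(i < 6, j < 5) (bBin i j)%:R.
Definition S0 (R : nzRingType) : 'M[R]_(5,6) := \matrix_(i < 5, j < 6) (bBn i j)%:R.

Lemma char2_nat (R : comUnitRingType) (h2 : (2%:R : R) = 0) n m :
  (n %% 2 = m %% 2)%N -> n%:R = m%:R :> R.
Proof.
move=> H; rewrite (divn_eq n 2) (divn_eq m 2) !natrD !natrM h2 !mulr0 !add0r H.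
by [].
Qed.

Ltac natc2 h2 := rewrite -?natrM -?natrD; apply: (char2_nat h2); by [].

Lemma BBi (R : comUnitRingType) (h2 : (2%:R : R) = 0) : Bm R *m Bim R = 1%:M.
Proof.
apply/matrixP; apply: ord6_cases; apply: ord6_cases; rewrite !mxE sum6 !mxE /=; natc2 h2.
Qed.
Lemma BiB (R : comUnitRingType) (h2 : (2%:R : R) = 0) : Bim R *m Bm R = 1%:M.
Proof.
apply/matrixP; apply: ord6_cases; apply: ord6_cases; rewrite !mxE sum6 !mxE /=; natc2 h2.
Qed.
Lemma S0P0 (R : comUnitRingType) (h2 : (2%:R : R) = 0) : S0 R *m P0 R = 1%:M.
Proof.
apply/matrixP; apply: ord5_cases; apply: ord5_cases; rewrite !mxE sum6 !mxE /=; natc2 h2.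
Qed.
Lemma constP0 (R : comUnitRingType) (h2 : (2%:R : R) = 0) (c : R) : (const_mx c : 'rV[R]_6) *m P0 R = 0.
Proof.
apply/rowP; apply: ord5_cases; rewrite !mxE sum6 !mxE /= ?mulr0n ?mulr1n ?mulr0 ?mulr1 ?addr0 ?add0r;
 first [by apply: (c2E h2 (W := c)); ring | by apply: (c2E h2 (W := c + c)); ring].
Qed.

Lemma hB (R : comUnitRingType) (h2 : (2%:R : R) = 0) (u v : 'rV[R]_6) :
  scmul (matsuo_sc R) (u *m Bm R) (v *m Bm R) = scmul (sc6 R) u v *m Bm R.
Proof.
rewrite scmulM scmul6; apply/rowP; apply: ord6_cases;
  rewrite /mulM /plM /mul6 !mxE /= !sum6 !mxE /bBn /=.
by apply: (c2E h2 (W := (u 0 o0 * v 0 o2 + 2%:R * u 0 o0 * v 0 o3 + u 0 o0 * v 0 o4 + 2%:R * u 0 o0 * v 0 o5 + u 0 o1 * v 0 o2 + u 0 o1 * v 0 o4 + u 0 o1 * v 0 o5 + u 0 o2 * v 0 o0 + u 0 o2 * v 0 o1 + 3%:R * u 0 o2 * v 0 o2 + 3%:R * u 0 o2 * v 0 o3 + 2%:R * u 0 o2 * v 0 o4 + 4%:R * u 0 o2 * v 0 o5 + 2%:R * u 0 o3 * v 0 o0 + 3%:R * u 0 o3 * v 0 o2 + 2%:R * u 0 o3 * v 0 o3 + 3%:R * u 0 o3 * v 0 o4 + 4%:R * u 0 o3 * v 0 o5 + u 0 o4 * v 0 o0 + u 0 o4 * v 0 o1 + 2%:R * u 0 o4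 * v 0 o2 + 3%:R * u 0 o4 * v 0 o3 + 2%:R * u 0 o4 * v 0 o4 + 4%:R * u 0 o4 * v 0 o5 + 2%:R * u 0 o5 * v 0 o0 + u 0 o5 * v 0 o1 + 4%:R * u 0 o5 * v 0 o2 + 4%:R * u 0 o5 * v 0 o3 + 4%:R * u 0 o5 * v 0 o4 + 6%:R * u 0 o5 * v 0 o5))); ring.
by apply: (c2E h2 (W := (u 0 o0 * v 0 o2 + u 0 o0 * v 0 o3 + u 0 o0 * v 0 o5 + u 0 o1 * v 0 o2 + u 0 o1 * v 0 o3 + 2%:R * u 0 o1 * v 0 o4 + 2%:R * u 0 o1 * v 0 o5 + u 0 o2 * v 0 o0 + u 0 o2 * v 0 o1 + 3%:R * u 0 o2 * v 0 o2 + 2%:R * u 0 o2 * v 0 o3 + 3%:R * u 0 o2 * v 0 o4 + 4%:R * u 0 o2 * v 0 o5 + u 0 o3 * v 0 o0 + u 0 o3 * v 0 o1 + 2%:R * u 0 o3 * v 0 o2 + 2%:R * u 0 o3 * v 0 o3 + 3%:R * u 0 o3 * v 0 o4 + 4%:R * u 0 o3 * v 0 o5 + 2%:R * u 0 o4 * v 0 o1 + 3%:R * u 0 o4 * v 0 o2 + 3%:R * u 0 o4 * v 0 o3 + 2%:R * u 0 o4 * v 0 o4 + 4%:R * u 0 o4 * v 0 o5 + u 0 o5 * v 0 o0 + 2%:R * u 0 o5 * v 0 o1 + 4%:R * u 0 o5 * v 0 o2 + 4%:R * u 0 o5 * v 0 o3 + 4%:R * u 0 o5 * v 0 o4 + 6%:R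 * u 0 o5 * v 0 o5))); ring.
by apply: (c2E h2 (W := (u 0 o0 * v 0 o2 + u 0 o0 * v 0 o3 + u 0 o0 * v 0 o5 + u 0 o1 * v 0 o2 + u 0 o1 * v 0 o4 + u 0 o1 * v 0 o5 + u 0 o2 * v 0 o0 + u 0 o2 * v 0 o1 + 3%:R * u 0 o2 * v 0 o2 + 2%:R * u 0 o2 * v 0 o3 + 2%:R * u 0 o2 * v 0 o4 + 4%:R * u 0 o2 * v 0 o5 + u 0 o3 * v 0 o0 + 2%:R * u 0 o3 * v 0 o2 + 2%:R * u 0 o3 * v 0 o3 + 3%:R * u 0 o3 * v 0 o4 + 4%:R * u 0 o3 * v 0 o5 + u 0 o4 * v 0 o1 + 2%:R * u 0 o4 * v 0 o2 + 3%:R * u 0 o4 * v 0 o3 + 2%:R * u 0 o4 * v 0 o4 + 4%:R * u 0 o4 * v 0 o5 + u 0 o5 * v 0 o0 + u 0 o5 * v 0 o1 + 4%:R * u 0 o5 * v 0 o2 + 4%:R * u 0 o5 * v 0 o3 + 4%:R * u 0 o5 * v 0 o4 + 6%:R * u 0 o5 * v 0 o5))); ring.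
by apply: (c2E h2 (W := (u 0 o1 * v 0 o4 + u 0 o1 * v 0 o5 + u 0 o2 * v 0 o3 + u 0 o2 * v 0 o4 + 2%:R * u 0 o2 * v 0 o5 + u 0 o3 * v 0 o2 + 2%:R * u 0 o3 * v 0 o3 + 3%:R * u 0 o3 * v 0 o4 + 4%:R * u 0 o3 * v 0 o5 + u 0 o4 * v 0 o1 + u 0 o4 * v 0 o2 + 3%:R * u 0 o4 * v 0 o3 + 2%:R * u 0 o4 * v 0 o4 + 4%:R * u 0 o4 * v 0 o5 + u 0 o5 * v 0 o1 + 2%:R * u 0 o5 * v 0 o2 + 4%:R * u 0 o5 * v 0 o3 + 4%:R * u 0 o5 * v 0 o4 + 6%:R * u 0 o5 * v 0 o5))); ring.
by apply: (c2E h2 (W := (u 0 o0 * v 0 o3 + u 0 o0 * v 0 o5 + u 0 o2 * v 0 o3 + u 0 o2 * v 0 o4 + 2%:R * u 0 o2 * v 0 o5 + u 0 o3 * v 0 o0 + u 0 o3 * v 0 o2 + 2%:R * u 0 o3 * v 0 o3 + 3%:R * u 0 o3 * v 0 o4 + 4%:R * u 0 o3 * v 0 o5 + u 0 o4 * v 0 o2 + 3%:R * u 0 o4 * v 0 o3 + 2%:R * u 0 o4 * v 0 o4 + 4%:R * u 0 o4 * v 0 o5 + u 0 o5 * v 0 o0 + 2%:R * u 0 o5 * v 0 o2 + 4%:R * u 0 o5 * v 0 o3 + 4%:R * u 0 o5 * v 0 o4 + 6%:R * u 0 o5 * v 0 o5))); ring.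
by apply: (c2E h2 (W := (u 0 o0 * v 0 o3 + u 0 o0 * v 0 o5 + u 0 o1 * v 0 o4 + u 0 o1 * v 0 o5 + u 0 o2 * v 0 o3 + u 0 o2 * v 0 o4 + 2%:R * u 0 o2 * v 0 o5 + u 0 o3 * v 0 o0 + u 0 o3 * v 0 o2 + 2%:R * u 0 o3 * v 0 o3 + 3%:R * u 0 o3 * v 0 o4 + 4%:R * u 0 o3 * v 0 o5 + u 0 o4 * v 0 o1 + u 0 o4 * v 0 o2 + 3%:R * u 0 o4 * v 0 o3 + 2%:R * u 0 o4 * v 0 o4 + 4%:R * u 0 o4 * v 0 o5 + u 0 o5 * v 0 o0 + u 0 o5 * v 0 o1 + 2%:R * u 0 o5 * v 0 o2 + 4%:R * u 0 o5 * v 0 o3 + 4%:R * u 0 o5 * v 0 o4 + 6%:R * u 0 o5 * v 0 o5))); ring.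
Qed.

Lemma P0mul (R : comUnitRingType) (h2 : (2%:R : R) = 0) (u v : 'rV[R]_6) :
  Defs.mulA u v *m P0 R = scmul (sc5 R) (u *m P0 R) (v *m P0 R).
Proof.
rewrite /Defs.mulA scmulM scmul5; apply/rowP; apply: ord5_cases;
  rewrite /mulM /plM /mul5 !mxE /= !sum6 !mxE /bBin /=.
by apply: (c2E h2 (W := (u 0 o0 * v 0 o1 + u 0 o0 * v 0 o2 + u 0 o0 * v 0 o4 + u 0 o0 * v 0 o5 + u 0 o1 * v 0 o0 + u 0 o1 * v 0 o2 + u 0 o1 * v 0 o3 + u 0 o1 * v 0 o5 + u 0 o2 * v 0 o0 + u 0 o2 * v 0 o1 + u 0 o2 * v 0 o3 + u 0 o2 * v 0 o4 + u 0 o3 * v 0 o1 + u 0 o3 * v 0 o2 + u 0 o3 * v 0 o4 + u 0 o3 * v 0 o5 + u 0 o4 * v 0 o0 + u 0 o4 * v 0 o2 + u 0 o4 * v 0 o3 + u 0 o4 * v 0 o5 + u 0 o5 * v 0 o0 + u 0 o5 * v 0 o1 + u 0 o5 * v 0 o3 + u 0 o5 * v 0 o4))); ring.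
by apply: (c2E h2 (W := (u 0 o0 * v 0 o1 + u 0 o0 * v 0 o2 + u 0 o0 * v 0 o4 + u 0 o0 * v 0 o5 + u 0 o1 * v 0 o0 + u 0 o1 * v 0 o2 + u 0 o1 * v 0 o3 + u 0 o1 * v 0 o5 + u 0 o2 * v 0 o0 + u 0 o2 * v 0 o1 + u 0 o2 * v 0 o3 + u 0 o2 * v 0 o4 + u 0 o3 * v 0 o1 + u 0 o3 * v 0 o2 + u 0 o3 * v 0 o4 + u 0 o3 * v 0 o5 + u 0 o4 * v 0 o0 + u 0 o4 * v 0 o2 + u 0 o4 * v 0 o3 + u 0 o4 * v 0 o5 + u 0 o5 * v 0 o0 + u 0 o5 * v 0 o1 + u 0 o5 * v 0 o3 + u 0 o5 * v 0 o4))); ring.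
by apply: (c2E h2 (W := (- u 0 o2 * v 0 o2 - u 0 o2 * v 0 o5 - u 0 o5 * v 0 o2 - u 0 o5 * v 0 o5))); ring.
by apply: (c2E h2 (W := (u 0 o1 * v 0 o3 + u 0 o1 * v 0 o5 - u 0 o2 * v 0 o5 + u 0 o3 * v 0 o1 + u 0 o5 * v 0 o1 - u 0 o5 * v 0 o2 - 2%:R * u 0 o5 * v 0 o5))); ring.
by apply: (c2E h2 (W := (u 0 o0 * v 0 o4 + u 0 o0 * v 0 o5 - u 0 o2 * v 0 o5 + u 0 o4 * v 0 o0 + u 0 o5 * v 0 o0 - u 0 o5 * v 0 o2 - 2%:R * u 0 o5 * v 0 o5))); ring.
Qed.

Lemma annA_const (k : fieldType) (h2 : (2%:R : k) = 0) (c : k) : in_annA (const_mx c : 'rV[k]_6).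
Proof.
move=> v; rewrite /Defs.mulA scmulM; apply/rowP; apply: ord6_cases;
  rewrite /mulM /plM !mxE /=.
by apply: (c2E h2 (W := (2%:R * c * v 0 o0 + c * v 0 o1 + c * v 0 o2 + c * v 0 o4 + c * v 0 o5))); ring.
by apply: (c2E h2 (W := (c * v 0 o0 + 2%:R * c * v 0 o1 + c * v 0 o2 + c * v 0 o3 + c * v 0 o5))); ring.
by apply: (c2E h2 (W := (c * v 0 o0 + c * v 0 o1 + 2%:R * c * v 0 o2 + c * v 0 o3 + c * v 0 o4))); ring.
by apply: (c2E h2 (W := (c * v 0 o1 + c * v 0 o2 + 2%:R * c * v 0 o3 + c * v 0 o4 + c * v 0 o5))); ring.
by apply: (c2E h2 (W := (c * v 0 o0 + c * v 0 o2 + c * v 0 o3 + 2%:R * c * v 0 o4 + c * v 0 o5))); ring.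
by apply: (c2E h2 (W := (c * v 0 o0 + c * v 0 o1 + c * v 0 o3 + c * v 0 o4 + 2%:R * c * v 0 o5))); ring.
Qed.

Lemma c2eq (R : comUnitRingType) (h2 : (2%:R : R) = 0) (x y : R) : x + y = 0 -> x = y.
Proof. by move=> H; apply: (c2E h2 (W := - y)); rewrite -[x]subr0 -H; ring. Qed.

Lemma annA_char (k : fieldType) (h2 : (2%:R : k) = 0) (v : 'rV[k]_6) :
  in_annA v -> v = const_mx (v 0 o0).
Proof.
move=> H.
have e0 := H (erow k o0); have e1 := H (erow k o1); have e5 := H (erow k o5).
have c1 := congr1 (fun M : 'rV[k]_6 => M 0 o1) e0.
have c4 := congr1 (fun M : 'rV[k]_6 => M 0 o4) e0.
have c0 := congr1 (fun M : 'rV[k]_6 => M 0 o0) e1.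
have c3 := congr1 (fun M : 'rV[k]_6 => M 0 o3) e1.
have c0' := congr1 (fun M : 'rV[k]_6 => M 0 o0) e5.
rewrite /Defs.mulA scmulM /mulM /plM !mxE /= ?mulr1n ?mulr0n ?mul1r ?mul0r ?mulr1 ?mulr0 ?add0r ?addr0 in c1.
rewrite /Defs.mulA scmulM /mulM /plM !mxE /= ?mulr1n ?mulr0n ?mul1r ?mul0r ?mulr1 ?mulr0 ?add0r ?addr0 in c4.
rewrite /Defs.mulA scmulM /mulM /plM !mxE /= ?mulr1n ?mulr0n ?mul1r ?mul0r ?mulr1 ?mulr0 ?add0r ?addr0 in c0.
rewrite /Defs.mulA scmulM /mulM /plM !mxE /= ?mulr1n ?mulr0n ?mul1r ?mul0r ?mulr1 ?mulr0 ?add0r ?addr0 in c3.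
rewrite /Defs.mulA scmulM /mulM /plM !mxE /= ?mulr1n ?mulr0n ?mul1r ?mul0r ?mulr1 ?mulr0 ?add0r ?addr0 in c0'.
have E1 := c2eq h2 c1; have E4 := c2eq h2 c4; have E0 := c2eq h2 c0.
have E3 := c2eq h2 c3; have E0' := c2eq h2 c0'.
apply/rowP; apply: ord6_cases; rewrite !mxE //.
- by rewrite E1 E0.
- by rewrite E3 -E4 E0'.
- by rewrite -E4 E0'.
Qed.


Lemma addc2 (R : comUnitRingType) (h2 : (2%:R : R) = 0) (x : R) : x + x = 0.
Proof. by apply: (c2E h2 (W := x)); ring. Qed.

Lemma kerP0 (k : fieldType) (h2 : (2%:R : k) = 0) (v : 'rV[k]_6) :
  v *m P0 k = 0 -> v = const_mx (v 0 o0).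
Proof.
move=> H.
have c0 := congr1 (fun M : 'rV[k]_5 => M 0 q0) H.
have c1 := congr1 (fun M : 'rV[k]_5 => M 0 q1) H.
have c2 := congr1 (fun M : 'rV[k]_5 => M 0 q2) H.
have c3 := congr1 (fun M : 'rV[k]_5 => M 0 q3) H.
have c4 := congr1 (fun M : 'rV[k]_5 => M 0 q4) H.
rewrite !mxE sum6 !mxE /bBin /= ?mulr1n ?mulr0n ?mul1r ?mul0r ?mulr1 ?mulr0 ?add0r ?addr0 in c0.
rewrite !mxE sum6 !mxE /bBin /= ?mulr1n ?mulr0n ?mul1r ?mul0r ?mulr1 ?mulr0 ?add0r ?addr0 in c1.
rewrite !mxE sum6 !mxE /bBin /= ?mulr1n ?mulr0n ?mul1r ?mul0r ?mulr1 ?mulr0 ?add0r ?addr0 in c2.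
rewrite !mxE sum6 !mxE /bBin /= ?mulr1n ?mulr0n ?mul1r ?mul0r ?mulr1 ?mulr0 ?add0r ?addr0 in c3.
rewrite !mxE sum6 !mxE /bBin /= ?mulr1n ?mulr0n ?mul1r ?mul0r ?mulr1 ?mulr0 ?add0r ?addr0 in c4.
have E2 := c2eq h2 c2; have E3 := c2eq h2 c3; have E4 := c2eq h2 c4.
rewrite E2 E3 -addrA (addc2 h2) addr0 in c0.
rewrite E2 E4 -addrA (addc2 h2) addr0 in c1.
have E0 := c2eq h2 c0; have E1 := c2eq h2 c1.
by apply/rowP; apply: ord6_cases; rewrite !mxE ?E0 ?E1 ?E2 ?E3 ?E4.
Qed.

Lemma P0ker (k : fieldType) (h2 : (2%:R : k) = 0) (v : 'rV[k]_6) :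
  v *m P0 k = 0 <-> in_annA v.
Proof.
split => [/(kerP0 h2) -> | /(annA_char h2) ->]; first exact: annA_const.
exact: constP0.
Qed.

Lemma Lexists (k : fieldType) (h2 : (2%:R : k) = 0) n' (sc' : 'I_n' -> 'I_n' -> 'rV[k]_n')
  (P : 'M[k]_(6,n')) : ann_quotient_model sc' P ->
  exists (L : 'M[k]_(5,n')) (L' : 'M[k]_(n',5)),
    [/\ L *m L' = 1%:M, L' *m L = 1%:M &
        forall u v, scmul sc' (u *m L) (v *m L) = scmul (sc5 k) u v *m L].
Proof.
case=> Pfull Pker Pmul.
have [S SP] := row_fullP Pfull.
have kerE1 : forall v : 'rV[k]_6, v *m P = 0 -> v *m P0 k = 0.
  by move=> v /Pker /(P0ker h2).
have kerE2 : forall v : 'rV[k]_6, v *m P0 k = 0 -> v *m P = 0.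
  by move=> v /(P0ker h2) /Pker.
have F1 : P0 k *m S0 k *m P = P.
  apply/row_matrixP => i; rewrite !row_mul !rowE.
  set e := delta_mx 0 i.
  have : (e - e *m P0 k *m S0 k) *m P0 k = 0.
    by rewrite mulmxBl -(mulmxA _ (S0 k)) (S0P0 h2) mulmx1 subrr.
  move/kerE2; rewrite mulmxBl => /eqP; rewrite subr_eq0 => /eqP ->.
  by [].
have F2 : P *m S *m P0 k = P0 k.
  apply/row_matrixP => i; rewrite !row_mul !rowE.
  set e := delta_mx 0 i.
  have : (e - e *m P *m S) *m P = 0.
    by rewrite mulmxBl -(mulmxA _ S) SP mulmx1 subrr.
  move/kerE1; rewrite mulmxBl => /eqP; rewrite subr_eq0 => /eqP ->.
  by [].
exists (S0 k *m P), (S *m P0 k); split.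
- by rewrite -!mulmxA (mulmxA P S) F2 (S0P0 h2).
- by rewrite -!mulmxA (mulmxA (P0 k) (S0 k)) F1 SP.
move=> u v; rewrite !mulmxA -Pmul -[in LHS]F1 !mulmxA (P0mul h2).
by rewrite -!(mulmxA _ (S0 k) (P0 k)) (S0P0 h2) !mulmx1.
Qed.

Lemma scmul_basis (R : comUnitRingType) a b (sc1 : 'I_a -> 'I_a -> 'rV[R]_a)
  (sc2 : 'I_b -> 'I_b -> 'rV[R]_b) (L : 'M[R]_(a,b)) :
  (forall i j, scmul sc2 (row i L) (row j L) = sc1 i j *m L) ->
  forall u v, scmul sc2 (u *m L) (v *m L) = scmul sc1 u v *m L.
Proof.
move=> H u v; rewrite scmul_rowE [X in _ = X *m L]/scmul mulmx_suml; apply: eq_bigr => k _.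
rewrite mulmx_suml; apply: eq_bigr => l _.
by rewrite H scalemxAl.
Qed.

Lemma map_sc5 (aR rR : nzRingType) (f : {rmorphism aR -> rR}) i j :
  map_mx f (sc5 aR i j) = sc5 rR i j.
Proof.
rewrite !sc5_tab; move: i j; apply: ord5_cases; apply: ord5_cases;
  by rewrite /tab5 /erow /= ?map_mx0 ?map_delta_mx.
Qed.

Lemma hLR (k : fieldType) (R : comUnitAlgType k) n' (sc' : 'I_n' -> 'I_n' -> 'rV[k]_n')
  (L : 'M[k]_(5,n')) :
  (forall u v, scmul sc' (u *m L) (v *m L) = scmul (sc5 k) u v *m L) ->
  forall u v : 'rV[R]_5, scmul (bc R sc') (u *m map_mx (in_alg R) L) (v *m map_mx (in_alg R) L)
     = scmul (sc5 R) u v *m map_mx (in_alg R) L.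
Proof.
move=> hL; apply: scmul_basis => i j.
by rewrite -!map_row /bc -map_scmul !rowE hL scmul_e map_mxM map_sc5.
Qed.


Lemma det_eD (R : comUnitRingType) (G : 'M[R]_2) : G \in unitmx ->
  (\det G)^-1 * (G t0 t0 * G t1 t1 - G t0 t1 * G t1 t0) = 1.
Proof. by move=> Gu; rewrite -det2 mulVr // -unitmxE. Qed.

Lemma zpart_mkg5 (R : comUnitRingType) z (G : 'M[R]_2) : zpart (mkg5 z G) = z.
Proof. by apply/rowP; apply: ord2_cases; rewrite !mxE. Qed.
Lemma Gpart_mkg5 (R : comUnitRingType) z (G : 'M[R]_2) : Gpart (mkg5 z G) = G.
Proof. by apply/matrixP; apply: ord2_cases; apply: ord2_cases; rewrite !mxE. Qed.

Lemma mkg5_aut (R : comUnitRingType) (h2 : (2%:R : R) = 0) z (G : 'M[R]_2) :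
  G \in unitmx -> is_aut (sc5 R) (mkg5 z G).
Proof.
move=> Gu; rewrite /mkg5; apply: is_autP; first by apply: (mkg5s_unit h2); apply: det_eD.
by move=> i j; rewrite scmul5 sc5_tab; apply: (mkg5s_rows h2); apply: det_eD.
Qed.

Lemma psi0M (R : comUnitRingType) (h2 : (2%:R : R) = 0) (g h : 'M[R]_5) :
  is_aut (sc5 R) g ->
  zpart (g *m h) = zpart g *m Gpart h + zpart h /\ Gpart (g *m h) = Gpart g *m Gpart h.
Proof.
move=> Hg; have [_ E] := aut5_char h2 Hg; move: E.
move: (zpart g) (Gpart g) => z G ->; split.
  apply/rowP; apply: ord2_cases; rewrite !mxE sum5 sum2 !mxE /mk5e /=; ring.
by apply/matrixP; apply: ord2_cases; apply: ord2_cases; rewrite !mxE sum5 sum2 !mxE /mk5e /=; ring.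
Qed.

Definition w56 (i : 'I_5) : 'I_6 := match val i with 0 => o0 | 1 => o1 | 2 => o2 | 3 => o3 | _ => o4 end.
Definition block5 (R : nzRingType) (g : 'M[R]_6) : 'M[R]_5 := \matrix_(i < 5, j < 5) g (w56 i) (w56 j).
Definition wpart (R : nzRingType) (g : 'M[R]_6) : 'rV[R]_2 :=
  \row_(j < 2) (if val j == 0%N then g o1 o0 * g o0 o5 + g o0 o0 * g o1 o5
                else g o1 o1 * g o0 o5 + g o0 o1 * g o1 o5).
Definition finvw (R : nzRingType) (w : 'rV[R]_2) (b : 'M[R]_5) : 'rV[R]_2 :=
  \row_(j < 2) (if val j == 0%N then w 0 t0 * b q0 q1 + w 0 t1 * b q0 q0
                else w 0 t0 * b q1 q1 + w 0 t1 * b q1 q0).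

Lemma block5_mkg6 (R : comUnitRingType) z (G : 'M[R]_2) f t : block5 (mkg6 z G f t) = mkg5 z G.
Proof. by apply/matrixP; apply: ord5_cases; apply: ord5_cases; rewrite !mxE. Qed.
Lemma t_mkg6 (R : comUnitRingType) z (G : 'M[R]_2) f t : mkg6 z G f t o5 o5 = t.
Proof. by rewrite !mxE. Qed.
Lemma Gpart_block5 (R : nzRingType) (g : 'M[R]_6) : Gpart (block5 g) = Gpart6 g.
Proof. by apply/matrixP; apply: ord2_cases; apply: ord2_cases; rewrite !mxE. Qed.

Lemma mkg6_aut (R : comUnitRingType) (h2 : (2%:R : R) = 0) z (G : 'M[R]_2) f t :
  G \in unitmx -> t \is a GRing.unit -> is_aut (sc6 R) (mkg6 z G f t).
Proof.
move=> Gu tU; rewrite /mkg6; apply: is_autP; first by apply: (@mkg6s_unit R h2 _ _ _ _ _ _ _ _ _ _ t^-1); [apply: det_eD | apply: mulVr].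
by move=> i j; rewrite scmul6 sc6_tab; apply: (mkg6s_rows h2); apply: det_eD.
Qed.

Lemma phi6_mul (R : comUnitRingType) (h2 : (2%:R : R) = 0) (g g' : 'M[R]_6) :
  is_aut (sc6 R) g -> is_aut (sc6 R) g' ->
  [/\ wpart (g *m g') = g' o5 o5 *: (wpart g *m twist (Gpart6 g')) + wpart g',
      block5 (g *m g') = block5 g *m block5 g' & (g *m g') o5 o5 = g o5 o5 * g' o5 o5].
Proof.
move=> Hg Hg'; have [Gu tU E] := aut6_char h2 Hg; have [Gu' tU' E'] := aut6_char h2 Hg'.
move: E E' Gu Gu' tU tU'.
move: (zpart6 g) (Gpart6 g) (fpart6 g) (g o5 o5) (zpart6 g') (Gpart6 g') (fpart6 g') (g' o5 o5).
move=> z G f t z' G' f' t' -> -> Gu Gu' tU tU'.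
have eD := det_eD Gu; have eD' := det_eD Gu'.
split.
- apply/rowP; apply: ord2_cases;
    rewrite /wpart /twist /mkg6 /mkg6s !mxE !sum6 ?sum2 !mxE /mk6e /mk5e /=.
  by apply: (c2E2 h2 eD eD' (W := ((\det G)^-1 * (\det G')^-1 * G t0 t1 * G t1 t0 * G' t0 t0 ^+ 2 * f' 0 t1 + (\det G)^-1 * (\det G')^-1 * G t0 t1 * G t1 t0 * G' t1 t0 ^+ 2 * f' 0 t0 + (\det G)^-1 ^+ 2 * (\det G')^-1 * G t0 t0 ^+ 2 * G t1 t0 ^+ 2 * G' t0 t0 ^+ 2 * f' 0 t0 + (\det G)^-1 ^+ 2 * (\det G')^-1 * G t0 t1 ^+ 2 * G t1 t0 ^+ 2 * G' t0 t0 ^+ 2 * f' 0 t1 + (\det G)^-1 ^+ 2 * (\det G')^-1 * G t0 t1 ^+ 2 * G t1 t0 ^+ 2 * G' t1 t0 ^+ 2 * f' 0 t0 + (\det G)^-1 ^+ 2 * (\det G')^-1 * G t0 t1 ^+ 2 * G t1 t1 ^+ 2 * G' t1 t0 ^+ 2 * f' 0 t1)) (V := ((\det G)^-1 * (\det G')^-1 * G t0 t0 * G t1 t1 * G' t0 t0 ^+ 2 * f' 0 t1 + (\det G)^-1 * (\det G')^-1 * G t0 t0 * G t1 t1 * G' t1 t0 ^+ 2 * f' 0 t0 + (\det G)^-1 * (\det G')^-1 * G t0 t1 * G t1 t0 * G' t0 t0 ^+ 2 * f' 0 t1 + (\det G)^-1 * (\det G')^-1 * G t0 t1 * G t1 t0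 * G' t1 t0 ^+ 2 * f' 0 t0 + (\det G')^-1 * G' t0 t0 ^+ 2 * f' 0 t1 + (\det G')^-1 * G' t1 t0 ^+ 2 * f' 0 t0)) (V' := 0)); ring.
  by apply: (c2E2 h2 eD eD' (W := ((\det G)^-1 * (\det G')^-1 * G t0 t1 * G t1 t0 * G' t0 t1 ^+ 2 * f' 0 t1 + (\det G)^-1 * (\det G')^-1 * G t0 t1 * G t1 t0 * G' t1 t1 ^+ 2 * f' 0 t0 + (\det G)^-1 ^+ 2 * (\det G')^-1 * G t0 t0 ^+ 2 * G t1 t0 ^+ 2 * G' t0 t1 ^+ 2 * f' 0 t0 + (\det G)^-1 ^+ 2 * (\det G')^-1 * G t0 t1 ^+ 2 * G t1 t0 ^+ 2 * G' t0 t1 ^+ 2 * f' 0 t1 + (\det G)^-1 ^+ 2 * (\det G')^-1 * G t0 t1 ^+ 2 * G t1 t0 ^+ 2 * G' t1 t1 ^+ 2 * f' 0 t0 + (\det G)^-1 ^+ 2 * (\det G')^-1 * G t0 t1 ^+ 2 * G t1 t1 ^+ 2 * G' t1 t1 ^+ 2 * f' 0 t1)) (V := ((\det G)^-1 * (\det G')^-1 * G t0 t0 * G t1 t1 * G' t0 t1 ^+ 2 * f' 0 t1 + (\det G)^-1 * (\det G')^-1 * G t0 t0 * G t1 t1 * G' t1 t1 ^+ 2 * f' 0 t0 + (\det G)^-1 * (\det G')^-1 * G t0 t1 * G t1 t0 * G' t0 t1 ^+ 2 * f' 0 t1 + (\det G)^-1 * (\det G')^-1 * G t0 t1 * G t1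 t0 * G' t1 t1 ^+ 2 * f' 0 t0 + (\det G')^-1 * G' t0 t1 ^+ 2 * f' 0 t1 + (\det G')^-1 * G' t1 t1 ^+ 2 * f' 0 t0)) (V' := 0)); ring.
- by apply/matrixP; apply: ord5_cases; apply: ord5_cases;
    rewrite /block5 /mkg6 /mkg6s !mxE !sum6 ?sum5 !mxE /mk6e /mk5e /=; ring.
- by rewrite /mkg6 /mkg6s !mxE !sum6 !mxE /mk6e /mk5e /=; ring.
Qed.

Lemma fpart_w (R : comUnitRingType) (h2 : (2%:R : R) = 0) (g : 'M[R]_6) :
  is_aut (sc6 R) g -> fpart6 g = finvw (wpart g) (block5 g).
Proof.
move=> Hg; have [Gu tU E] := aut6_char h2 Hg; move: E Gu tU.
move: (zpart6 g) (Gpart6 g) (fpart6 g) (g o5 o5) => z G f t -> Gu tU.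
have eD := det_eD Gu.
apply/rowP; apply: ord2_cases; rewrite /finvw /wpart /fpart6 /block5 /mkg6 /mkg6s !mxE /mk6e /mk5e /=.
  by apply: (c2E1 h2 eD (W := ((\det G)^-1 * f 0 t0 * G t0 t1 * G t1 t0 - (\det G)^-1 ^+ 2 * f 0 t0 * G t0 t0 ^+ 2 * G t1 t1 ^+ 2 - (\det G)^-1 ^+ 2 * f 0 t1 * G t0 t0 ^+ 2 * G t0 t1 ^+ 2 + f 0 t0)) (V := ((\det G)^-1 * f 0 t0 * G t0 t0 * G t1 t1 + (\det G)^-1 * f 0 t0 * G t0 t1 * G t1 t0 + f 0 t0))); ring.
  by apply: (c2E1 h2 eD (W := ((\det G)^-1 * f 0 t1 * G t0 t1 * G t1 t0 - (\det G)^-1 ^+ 2 * f 0 t0 * G t1 t0 ^+ 2 * G t1 t1 ^+ 2 - (\det G)^-1 ^+ 2 * f 0 t1 * G t0 t0 ^+ 2 * G t1 t1 ^+ 2 + f 0 t1)) (V := ((\det G)^-1 * f 0 t1 * G t0 t0 * G t1 t1 + (\det G)^-1 * f 0 t1 * G t0 t1 * G t1 t0 + f 0 t1))); ring.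
Qed.

Lemma wpart_finv (R : comUnitRingType) (h2 : (2%:R : R) = 0) z (G : 'M[R]_2) w t :
  G \in unitmx -> wpart (mkg6 z G (finvw w (mkg5 z G)) t) = w.
Proof.
move=> Gu; have eD := det_eD Gu.
apply/rowP; apply: ord2_cases; rewrite /finvw /wpart /mkg5 /mkg5s /mkg6 /mkg6s !mxE /mk6e /mk5e /=.
  by apply: (c2E1 h2 eD (W := ((\det G)^-1 * G t0 t1 * G t1 t0 * w 0 t0 + (\det G)^-1 ^+ 2 * G t0 t0 ^+ 2 * G t1 t0 ^+ 2 * w 0 t1 + (\det G)^-1 ^+ 2 * G t0 t1 ^+ 2 * G t1 t0 ^+ 2 * w 0 t0)) (V := ((\det G)^-1 * G t0 t0 * G t1 t1 * w 0 t0 + (\det G)^-1 * G t0 t1 * G t1 t0 * w 0 t0 + w 0 t0))); ring.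
  by apply: (c2E1 h2 eD (W := ((\det G)^-1 * G t0 t1 * G t1 t0 * w 0 t1 + (\det G)^-1 ^+ 2 * G t0 t1 ^+ 2 * G t1 t0 ^+ 2 * w 0 t1 + (\det G)^-1 ^+ 2 * G t0 t1 ^+ 2 * G t1 t1 ^+ 2 * w 0 t0)) (V := ((\det G)^-1 * G t0 t0 * G t1 t1 * w 0 t1 + (\det G)^-1 * G t0 t1 * G t1 t0 * w 0 t1 + w 0 t1))); ring.
Qed.

Lemma sandwich (R : comUnitRingType) a b (A : 'M[R]_(a,b)) (A' : 'M[R]_(b,a)) (h : 'M[R]_b) :
  A' *m A = 1%:M -> A' *m (A *m h *m A') *m A = h.
Proof. by move=> H; rewrite !mulmxA H mul1mx -mulmxA H mulmx1. Qed.

Lemma sandwichM (R : comUnitRingType) a b (A : 'M[R]_(a,b)) (A' : 'M[R]_(b,a)) (g h : 'M[R]_b) :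
  A' *m A = 1%:M -> A *m (g *m h) *m A' = (A *m g *m A') *m (A *m h *m A').
Proof. by move=> H; rewrite -!mulmxA (mulmxA A' A) H mul1mx. Qed.

Lemma zpart_map (aR rR : nzRingType) (f : {rmorphism aR -> rR}) (g : 'M[aR]_5) :
  zpart (map_mx f g) = map_mx f (zpart g).
Proof. by apply/rowP => j; rewrite !mxE. Qed.
Lemma Gpart_map (aR rR : nzRingType) (f : {rmorphism aR -> rR}) (g : 'M[aR]_5) :
  Gpart (map_mx f g) = map_mx f (Gpart g).
Proof. by apply/matrixP => i j; rewrite !mxE. Qed.
Lemma block5_map (aR rR : nzRingType) (f : {rmorphism aR -> rR}) (g : 'M[aR]_6) :
  block5 (map_mx f g) = map_mx f (block5 g).
Proof. by apply/matrixP => i j; rewrite !mxE. Qed.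
Lemma wpart_map (aR rR : nzRingType) (f : {rmorphism aR -> rR}) (g : 'M[aR]_6) :
  wpart (map_mx f g) = map_mx f (wpart g).
Proof.
by apply/rowP => j; rewrite !mxE; case: ifP => _; rewrite ?mxE rmorphD !rmorphM.
Qed.
Lemma zpart_block5 (R : nzRingType) (g : 'M[R]_6) : zpart (block5 g) = zpart6 g.
Proof. by apply/rowP; apply: ord2_cases; rewrite !mxE. Qed.
Lemma Bm_map (aR rR : nzRingType) (f : {rmorphism aR -> rR}) : map_mx f (Bm aR) = Bm rR.
Proof. by apply/matrixP => i j; rewrite !mxE rmorph_nat. Qed.
Lemma Bim_map (aR rR : nzRingType) (f : {rmorphism aR -> rR}) : map_mx f (Bim aR) = Bim rR.
Proof. by apply/matrixP => i j; rewrite !mxE rmorph_nat. Qed.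
Lemma inalg_map (k : fieldType) (R S : comUnitAlgType k) (f : {lrmorphism R -> S}) m n
  (L : 'M[k]_(m,n)) : map_mx f (map_mx (in_alg R) L) = map_mx (in_alg S) L.
Proof. by apply/matrixP => i j; rewrite !mxE !in_algE rmorph_alg. Qed.

Unset Implicit Arguments.

Theorem proposition6p12 (k : fieldType) (hk : 2 \in [pchar k]) (n' : nat)
  (sc' : 'I_n' -> 'I_n' -> 'rV[k]_n') (P : 'M[k]_(6, n'))
  (hA' : ann_quotient_model sc' P) :
  exists (rho : forall R : comUnitAlgType k, 'M[R]_2 -> 'rV[R]_2 -> 'rV[R]_2)
         (psi : forall R : comUnitAlgType k, 'M[R]_n' -> ('rV[R]_2 * 'M[R]_2)%type),
  [/\ GL2_right_action rho,
      @group_functor_iso k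
        (fun R : comUnitAlgType k => 'M[R]_n')
        (fun R : comUnitAlgType k => ('rV[R]_2 * 'M[R]_2)%type)
        (fun R g => is_aut (bc R sc') g)
        (fun R y => y.2 \in unitmx)
        (fun R g h => g *m h)
        (fun R => sdmul (@mulmx R 2 2 2) (rho R))
        (fun R S f g => map_mx f g)
        (fun R S f y => (map_mx f y.1, map_mx f y.2))
        psi &
      exists phi : forall R : comUnitAlgType k,
                     'M[R]_6 -> ('rV[R]_2 * ('M[R]_n' * R))%type,
        @group_functor_iso k
          (fun R : comUnitAlgType k => 'M[R]_6)
          (fun R : comUnitAlgType k => ('rV[R]_2 * ('M[R]_n' * R))%type)
          (fun R g => is_aut (matsuo_sc R) g)
          (fun R y => is_aut (bc R sc') y.2.1 /\ y.2.2 \is a GRing.unit)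
          (fun R g h => g *m h)
          (fun R => sdmul (fun h h' : 'M[R]_n' * R => (h.1 *m h'.1, h.2 * h'.2))
                          (fun h w => h.2 *: (w *m twist (psi R h.1).2)))
          (fun R S f g => map_mx f g)
          (fun R S f y => (map_mx f y.1, (map_mx f y.2.1, f y.2.2)))
          phi].

Proof.
have h2k : (2%:R : k) = 0 := pcharf0 hk.
have h2R : forall R : comUnitAlgType k, (2%:R : R) = 0.
  by move=> R; rewrite -(rmorph_nat (in_alg R)) h2k rmorph0.
have [L [L' [LL' L'L hL]]] := Lexists h2k hA'.
pose Lr (R : comUnitAlgType k) := map_mx (in_alg R) L.
pose L'r (R : comUnitAlgType k) := map_mx (in_alg R) L'.
have LLr : forall R, Lr R *m L'r R = 1%:M.
  by move=> R; rewrite /Lr /L'r -map_mxM LL' map_mx1.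
have L'Lr : forall R, L'r R *m Lr R = 1%:M.
  by move=> R; rewrite /Lr /L'r -map_mxM L'L map_mx1.
have tr5 : forall (R : comUnitAlgType k) (h : 'M[R]_n'),
    is_aut (bc R sc') h <-> is_aut (sc5 R) (Lr R *m h *m L'r R).
  by move=> R h; apply: is_aut_transport; [exact: LLr | exact: L'Lr | exact: hLR].
have tr6 : forall (R : comUnitAlgType k) (g : 'M[R]_6),
    is_aut (matsuo_sc R) g <-> is_aut (sc6 R) (Bm R *m g *m Bim R).
  move=> R g; apply: is_aut_transport;
    [exact: (BBi (h2R R)) | exact: (BiB (h2R R)) | exact: (hB (h2R R))].
exists (fun R M v => v *m M).
exists (fun R g => (zpart (Lr R *m g *m L'r R), Gpart (Lr R *m g *m L'r R))).
split.
- split.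
  + by move=> R M v w _; rewrite mulmxDl.
  + by move=> R M M' v _ _; rewrite mulmxA.
  + by move=> R v; rewrite mulmx1.
  + by move=> R S f M v _; rewrite map_mxM.
- split.
  + by move=> R g /tr5 Hg; have [Gu _] := aut5_char (h2R R) Hg.
  + move=> R g h /tr5 Hg /tr5 Hh.
    rewrite (sandwichM _ _ (L'Lr R)).
    have [Ez EG] := psi0M (h2R R) (Lr R *m h *m L'r R) Hg.
    by rewrite /sdmul /= Ez EG.
  + move=> R g h /tr5 Hg /tr5 Hh [Ez EG].
    have [_ E1] := aut5_char (h2R R) Hg; have [_ E2] := aut5_char (h2R R) Hh.
    have Egh : Lr R *m g *m L'r R = Lr R *m h *m L'r R by rewrite E1 E2 Ez EG.
    by rewrite -(sandwich g (L'Lr R)) -(sandwich h (L'Lr R)) Egh.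
  + move=> R [z G] /= Gu.
    exists (L'r R *m mkg5 z G *m Lr R).
      by apply/tr5; rewrite (sandwich _ (LLr R)); exact: mkg5_aut (h2R R) z G Gu.
    by rewrite (sandwich _ (LLr R)) zpart_mkg5 Gpart_mkg5.
  + move=> R S f g _ /=.
    by rewrite /Lr /L'r -(inalg_map f L) -(inalg_map f L') -!map_mxM zpart_map Gpart_map.
exists (fun (R : comUnitAlgType k) (g : 'M[R]_6) => (wpart (Bm R *m g *m Bim R),
                    (L'r R *m block5 (Bm R *m g *m Bim R) *m Lr R, (Bm R *m g *m Bim R) o5 o5))).
split.
- move=> R g /tr6; move: (Bm R *m g *m Bim R) => g6 Hg.
  have [Gu tU E] := aut6_char (h2R R) Hg; split => //.
  apply/tr5; rewrite (sandwich _ (LLr R)) E block5_mkg6.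
  by apply: (mkg5_aut (h2R R)).
- move=> R g g' /tr6 Hg /tr6 Hg'.
  rewrite (sandwichM _ _ (BiB (h2R R))).
  move: (Bm R *m g *m Bim R) (Bm R *m g' *m Bim R) Hg Hg' => g6 g6' Hg Hg'.
  have [Ew Eb Et] := phi6_mul (h2R R) Hg Hg'.
  rewrite /sdmul /= Ew Eb Et (sandwich _ (LLr R)) Gpart_block5.
  by rewrite -!mulmxA (mulmxA (Lr R)) LLr mul1mx.
- move=> R g g' /tr6 Hg /tr6 Hg' [Ew Eh Et].
  have Eb : block5 (Bm R *m g *m Bim R) = block5 (Bm R *m g' *m Bim R).
    by rewrite -(sandwich (block5 (Bm R *m g *m Bim R)) (LLr R)) Eh (sandwich _ (LLr R)).
  suff E6 : Bm R *m g *m Bim R = Bm R *m g' *m Bim R.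
    by rewrite -(sandwich g (BiB (h2R R))) -(sandwich g' (BiB (h2R R))) E6.
  have [_ _ E1] := aut6_char (h2R R) Hg; have [_ _ E2] := aut6_char (h2R R) Hg'.
  rewrite E1 E2 (fpart_w (h2R R) Hg) (fpart_w (h2R R) Hg').
  by rewrite -!zpart_block5 -!Gpart_block5 Ew Eb Et.
- move=> R [w [h t]] /= [Hh tU].
  have Hb := (tr5 R h).1 Hh.
  have [Gu Eb] := aut5_char (h2R R) Hb.
  move: Eb Gu; move: (zpart (Lr R *m h *m L'r R)) (Gpart (Lr R *m h *m L'r R)) => z G Eb Gu.
  exists (Bim R *m mkg6 z G (finvw w (mkg5 z G)) t *m Bm R).
    by apply/tr6; rewrite (sandwich _ (BBi (h2R R))); by apply: (mkg6_aut (h2R R)).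
  rewrite (sandwich _ (BBi (h2R R))) (wpart_finv (h2R R) _ _ _ Gu) block5_mkg6 t_mkg6 -Eb.
  by rewrite (sandwich _ (L'Lr R)).
- move=> R S f g _ /=.
  rewrite /Lr /L'r -(inalg_map f L) -(inalg_map f L') -(Bm_map f) -(Bim_map f) -!map_mxM.
  by rewrite wpart_map block5_map -!map_mxM mxE.
Qed.
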